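(* Suppose the joint distribution $F$ of $\mathbf C$ is smooth and fully supported on $[0,\bar C]^N$. Then for each prosumer $i$ and each fixed $\mathbf x_{-i}\in[0,\bar C]^{N-1}$, the expected penalty $x_i\mapsto \mathbb E[\phi(x_i,\mathbf x_{-i};\mathbf C)]$ is continuously differentiable and convex on $[0,\bar C]$, and it is continuous in $\mathbf x_{-i}$. Consequently $\pi_i(x_i,\mathbf x_{-i},\rho)$ is concave in $x_i$ and jointly continuous in $(x_i,\mathbf x_{-i})$.
   Context: There are $N\ge1$ prosumers with capacities $\mathbf C=(C_1,\dots,C_N)\in[0,\bar C]^N$ with joint cdf $F$; offers $x_j\in[0,\bar C]$, $X=\sum_j x_j$, $\lambda_{RT}>0$, $z^+=\max\{z,0\}$. The penalty of prosumer $i$ is $\phi(x_i,\mathbf x_{-i};\mathbf C)=\lambda_{RT}(X-\sum_j C_j)^+\,(x_i-C_i)^+/\sum_{j=1}^N(x_j-C_j)^+$ (set to $0$ when the denominator vanishes). Prosumer $i$'s payoff is $\pi_i(x_i,\mathbf x_{-i},\rho)=\rho x_i+\mathbb E[u(d^0+C_i-x_i)-\phi(x_i,\mathbf x_{-i};\mathbf C)]$ with $\rho\ge0$, $d^0>\bar C$, and $u$ continuously differentiable, nonnegative, concave, increasing. *)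

(* Defs.v *)
From Stdlib Require Import Reals Lra ClassicalEpsilon.
Open Scope R_scope.

(* Vectors in R^N are functions nat -> R; only coordinates j < N matter. *)
Fixpoint rsum (n : nat) (f : nat -> R) : R :=
  match n with O => 0 | S k => rsum k f + f k end.

Definition upd (c : nat -> R) (k : nat) (t : R) : nat -> R :=
  fun j => if Nat.eqb j k then t else c j.

Definition in_cube (N : nat) (Cbar : R) (c : nat -> R) : Prop :=
  forall j, (j < N)%nat -> 0 <= c j <= Cbar.

(* 1-D Riemann integral, set to 0 when the integrand is not Riemann integrable *)
Definition Rint (g : R -> R) (a b : R) : R :=
  match excluded_middle_informative
          (exists pr : Riemann_integrable g a b, True) with
  | left H => RiemannInt (proj1_sig (constructive_indefinite_description _ H))
  | right _ => 0
  end.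

Fixpoint iint (n : nat) (Cbar : R) (g : (nat -> R) -> R) (c : nat -> R) : R :=
  match n with
  | O => g c
  | S k => Rint (fun t => iint k Cbar g (upd c k t)) 0 Cbar
  end.

(* expectation of h(C) when C has density f on [0,Cbar]^N *)
Definition Expect (N : nat) (Cbar : R) (f : (nat -> R) -> R)
  (h : (nat -> R) -> R) : R :=
  iint N Cbar (fun c => h c * f c) (fun _ => 0).

Definition cont_on_cube (N : nat) (Cbar : R) (g : (nat -> R) -> R) : Prop :=
  forall c, in_cube N Cbar c -> forall eps, 0 < eps -> exists del, 0 < del /\
    forall c', in_cube N Cbar c' ->
      (forall j, (j < N)%nat -> Rabs (c' j - c j) < del) ->
      Rabs (g c' - g c) < eps.

Definition phi (lam : R) (N i : nat) (x c : nat -> R) : R :=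
  let D := rsum N (fun j => Rmax (x j - c j) 0) in
  if Req_EM_T D 0 then 0
  else lam * Rmax (rsum N x - rsum N c) 0 * Rmax (x i - c i) 0 / D.

Definition ExpPen (lam : R) (N : nat) (Cbar : R) (f : (nat -> R) -> R)
  (i : nat) (x : nat -> R) : R :=
  Expect N Cbar f (fun c => phi lam N i x c).

Definition payoff (lam : R) (N : nat) (Cbar : R) (f : (nat -> R) -> R)
  (u : R -> R) (d0 : R) (i : nat) (x : nat -> R) (rho : R) : R :=
  rho * x i + Expect N Cbar f (fun c => u (d0 + c i - x i) - phi lam N i x c).

Definition convex_on (g : R -> R) (a b : R) : Prop :=
  forall s t l, a <= s <= b -> a <= t <= b -> 0 <= l <= 1 ->
    g (l * s + (1 - l) * t) <= l * g s + (1 - l) * g t.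
Definition concave_on (g : R -> R) (a b : R) : Prop :=
  forall s t l, a <= s <= b -> a <= t <= b -> 0 <= l <= 1 ->
    l * g s + (1 - l) * g t <= g (l * s + (1 - l) * t).

Definition cont_on_interval (g : R -> R) (a b : R) : Prop :=
  forall s, a <= s <= b -> forall eps, 0 < eps -> exists del, 0 < del /\
    forall t, a <= t <= b -> Rabs (t - s) < del -> Rabs (g t - g s) < eps.

Definition C1_on (g : R -> R) (a b : R) : Prop :=
  cont_on_interval g a b /\
  exists g', (forall t, a < t < b -> derivable_pt_lim g t (g' t)) /\
             cont_on_interval g' a b.

(* Main.v *)
Require Import Defs.
From Stdlib Require Import Reals.
Open Scope R_scope.
From Stdlib Require Import Lra Lia Psatz ClassicalEpsilon Classical FunctionalExtensionality.
From Coquelicot Require Import Coquelicot.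
Open Scope R_scope.

Lemma Rint_RInt g a b : ex_RInt g a b -> Rint g a b = RInt g a b.
Proof.
  intros H. unfold Rint.
  destruct excluded_middle_informative as [e|n].
  - destruct (constructive_indefinite_description _ e) as [pr Hpr]. simpl.
    symmetry; apply RInt_Reals.
  - exfalso; apply n. exists (ex_RInt_Reals_0 _ _ _ H); auto.
Qed.

Lemma Rint_ext g1 g2 a b : a <= b -> (forall x, a <= x <= b -> g1 x = g2 x) ->
  Rint g1 a b = Rint g2 a b.
Proof.
  intros Hab H.
  assert (H' : forall x, Rmin a b <= x <= Rmax a b -> g1 x = g2 x).
  { intros x Hx. rewrite Rmin_left in Hx by lra. rewrite Rmax_right in Hx by lra. auto. }
  destruct (classic (ex_RInt g1 a b)) as [I|NI].
  - assert (I2 : ex_RInt g2 a b).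
    { apply ex_RInt_Reals_1. apply (Riemann_integrable_ext g1); auto. apply ex_RInt_Reals_0; auto. }
    rewrite !Rint_RInt by auto. apply RInt_ext. intros x Hx. apply H'. lra.
  - assert (NI2 : ~ ex_RInt g2 a b).
    { intro I2. apply NI. apply ex_RInt_Reals_1. apply (Riemann_integrable_ext g2).
      intros; symmetry; auto. apply ex_RInt_Reals_0; auto. }
    unfold Rint.
    destruct excluded_middle_informative as [e|]; [exfalso; destruct e as [pr _]; apply NI, (ex_RInt_Reals_1 _ _ _ pr)|].
    destruct excluded_middle_informative as [e|]; [exfalso; destruct e as [pr _]; apply NI2, (ex_RInt_Reals_1 _ _ _ pr)|].
    reflexivity.
Qed.

Lemma upd_same c k t : upd c k t k = t.
Proof. unfold upd. rewrite Nat.eqb_refl. auto. Qed.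
Lemma upd_other c k t j : j <> k -> upd c k t j = c j.
Proof. intros H. unfold upd. destruct (Nat.eqb_spec j k); [lia|auto]. Qed.

Lemma in_cube_upd M Cb c k t : in_cube M Cb c -> 0 <= t <= Cb -> in_cube M Cb (upd c k t).
Proof. intros H Ht j Hj. unfold upd. destruct (Nat.eqb j k); auto. Qed.

Lemma rsum_ext n f g : (forall j, (j < n)%nat -> f j = g j) -> rsum n f = rsum n g.
Proof. induction n; simpl; intros H; auto. rewrite IHn by (intros; apply H; lia). rewrite H by lia; auto. Qed.

Lemma rsum_plus n f g : rsum n (fun j => f j + g j) = rsum n f + rsum n g.
Proof. induction n; simpl; [lra|rewrite IHn; lra]. Qed.
Lemma rsum_minus n f g : rsum n (fun j => f j - g j) = rsum n f - rsum n g.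
Proof. induction n; simpl; [lra|rewrite IHn; lra]. Qed.

Lemma rsum_le n f g : (forall j, (j < n)%nat -> f j <= g j) -> rsum n f <= rsum n g.
Proof. induction n; simpl; intros H; [lra|]. assert (f n <= g n) by (apply H; lia).
  assert (rsum n f <= rsum n g) by (apply IHn; intros; apply H; lia). lra. Qed.

Lemma rsum_nonneg n f : (forall j, (j < n)%nat -> 0 <= f j) -> 0 <= rsum n f.
Proof. intros H. replace 0 with (rsum n (fun _ => 0)). apply rsum_le; auto.
  induction n; simpl; auto. rewrite IHn; [lra|]. intros; apply H; lia. Qed.

Lemma rsum_split n f i : (i < n)%nat ->
  rsum n f = rsum n (fun j => if Nat.eqb j i then 0 else f j) + f i.
Proof.
  induction n; intros Hi; [lia|]. simpl.
  destruct (Nat.eqb_spec n i).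
  - subst. replace (rsum i (fun j => if Nat.eqb j i then 0 else f j)) with (rsum i f). lra.
    apply rsum_ext. intros j Hj. destruct (Nat.eqb_spec j i); [lia|auto].
  - rewrite (IHn ltac:(lia)). lra.
Qed.

Lemma rsum_upd n c i t : (i < n)%nat -> rsum n (upd c i t) = rsum n c - c i + t.
Proof.
  intros Hi. rewrite (rsum_split n (upd c i t) i Hi), (rsum_split n c i Hi).
  rewrite upd_same. replace (rsum n (fun j => if Nat.eqb j i then 0 else upd c i t j))
    with (rsum n (fun j => if Nat.eqb j i then 0 else c j)). lra.
  apply rsum_ext. intros j Hj. destruct (Nat.eqb_spec j i); auto. rewrite upd_other; auto.
Qed.

Lemma rsum_scal n a f : rsum n (fun j => a * f j) = a * rsum n f.
Proof. induction n; simpl; [lra|rewrite IHn; lra]. Qed.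

Definition ctsat (M : nat) (Cb : R) (g : (nat -> R) -> R) (z : nat -> R) : Prop :=
  forall eps, 0 < eps -> exists del, 0 < del /\ forall z', in_cube M Cb z' ->
    (forall j, (j < M)%nat -> Rabs (z' j - z j) < del) -> Rabs (g z' - g z) < eps.

Definition ucont (M : nat) (Cb : R) (g : (nat -> R) -> R) : Prop :=
  forall eps, 0 < eps -> exists del, 0 < del /\ forall c c', in_cube M Cb c -> in_cube M Cb c' ->
    (forall j, (j < M)%nat -> Rabs (c' j - c j) < del) -> Rabs (g c' - g c) < eps.

Lemma ct_const M Cb a z : ctsat M Cb (fun _ => a) z.
Proof. intros e He. exists 1. split; [lra|]. intros. replace (a - a) with 0 by ring. rewrite Rabs_R0. lra. Qed.

Lemma ct_proj M Cb j z : (j < M)%nat -> ctsat M Cb (fun w => w j) z.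
Proof. intros Hj e He. exists e. split; [auto|]. intros z' _ H. apply H; auto. Qed.

Lemma ct_plus M Cb g1 g2 z : ctsat M Cb g1 z -> ctsat M Cb g2 z ->
  ctsat M Cb (fun w => g1 w + g2 w) z.
Proof.
  intros H1 H2 e He. destruct (H1 (e/2) ltac:(lra)) as [d1 [Hd1 K1]].
  destruct (H2 (e/2) ltac:(lra)) as [d2 [Hd2 K2]].
  exists (Rmin d1 d2). split; [apply Rmin_pos; auto|]. intros z' Hz Hc.
  assert (A1 := K1 z' Hz (fun j Hj => Rlt_le_trans _ _ _ (Hc j Hj) (Rmin_l _ _))).
  assert (A2 := K2 z' Hz (fun j Hj => Rlt_le_trans _ _ _ (Hc j Hj) (Rmin_r _ _))).
  replace (g1 z' + g2 z' - (g1 z + g2 z)) with ((g1 z' - g1 z) + (g2 z' - g2 z)) by ring.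
  eapply Rle_lt_trans; [apply Rabs_triang|]. lra.
Qed.

Lemma ct_comp M Cb g F z : ctsat M Cb g z -> continuity_pt F (g z) ->
  ctsat M Cb (fun w => F (g w)) z.
Proof.
  intros H HF e He. destruct (HF e He) as [a [Ha Ka]].
  destruct (H a Ha) as [d [Hd Kd]]. exists d. split; auto. intros z' Hz Hc.
  destruct (Req_dec (g z') (g z)) as [E|E]. { rewrite E. replace (F (g z) - F (g z)) with 0 by ring. rewrite Rabs_R0. lra. }
  apply (Ka (g z')). split. split; [exact I|intro Q; apply E; symmetry; exact Q]. simpl. unfold Rdist. apply Kd; auto.
Qed.

Lemma ct_ext M Cb g1 g2 z : (forall w, g1 w = g2 w) -> ctsat M Cb g1 z -> ctsat M Cb g2 z.
Proof. intros E H e He. destruct (H e He) as [d [Hd K]]. exists d; split; auto.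
  intros; rewrite <- !E; auto. Qed.

Lemma cont_pt_of_continuous F x : continuous F x -> continuity_pt F x.
Proof. intros H. apply continuity_pt_filterlim. exact H. Qed.

Lemma ct_scal M Cb a g z : ctsat M Cb g z -> ctsat M Cb (fun w => a * g w) z.
Proof. intros H. apply (ct_comp M Cb g (fun y => a * y)); auto.
  apply (continuity_pt_scal (fun y => y)). apply continuity_pt_id. Qed.

Lemma ct_minus M Cb g1 g2 z : ctsat M Cb g1 z -> ctsat M Cb g2 z ->
  ctsat M Cb (fun w => g1 w - g2 w) z.
Proof. intros H1 H2. apply (ct_ext _ _ (fun w => g1 w + (-1) * g2 w)). intros; ring.
  apply ct_plus; auto. apply ct_scal; auto. Qed.

Lemma ct_sq M Cb g z : ctsat M Cb g z -> ctsat M Cb (fun w => g w * g w) z.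
Proof. intros H. apply (ct_comp M Cb g (fun y => y * y)); auto.
  apply (continuity_pt_mult (fun y => y) (fun y => y)); apply continuity_pt_id. Qed.

Lemma ct_mult M Cb g1 g2 z : ctsat M Cb g1 z -> ctsat M Cb g2 z ->
  ctsat M Cb (fun w => g1 w * g2 w) z.
Proof. intros H1 H2.
  apply (ct_ext _ _ (fun w => /4 * ((g1 w + g2 w) * (g1 w + g2 w) - (g1 w - g2 w) * (g1 w - g2 w)))).
  intros; field. apply ct_scal. apply ct_minus; apply ct_sq; [apply ct_plus|apply ct_minus]; auto. Qed.

Lemma ct_inv M Cb g z : ctsat M Cb g z -> g z <> 0 -> ctsat M Cb (fun w => / g w) z.
Proof. intros H Hz. apply (ct_comp M Cb g (fun y => / y)); auto.
  apply (continuity_pt_inv (fun y => y)); auto. apply continuity_pt_id. Qed.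

Lemma ct_div M Cb g1 g2 z : ctsat M Cb g1 z -> ctsat M Cb g2 z -> g2 z <> 0 ->
  ctsat M Cb (fun w => g1 w / g2 w) z.
Proof. intros. unfold Rdiv. apply ct_mult; auto. apply ct_inv; auto. Qed.

Lemma Rmax_abs_form a b : Rmax a b = (a + b + Rabs (a - b)) / 2.
Proof. unfold Rmax. destruct (Rle_dec a b).
  rewrite Rabs_left1 by lra. lra. rewrite Rabs_right by lra. lra. Qed.

Lemma ct_max M Cb g1 g2 z : ctsat M Cb g1 z -> ctsat M Cb g2 z ->
  ctsat M Cb (fun w => Rmax (g1 w) (g2 w)) z.
Proof. intros H1 H2.
  apply (ct_ext _ _ (fun w => /2 * (g1 w + g2 w + Rabs (g1 w - g2 w)))).
  intros; rewrite Rmax_abs_form; field. apply ct_scal. apply ct_plus. apply ct_plus; auto.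
  apply (ct_comp M Cb (fun w => g1 w - g2 w) Rabs). apply ct_minus; auto. apply Rcontinuity_abs. Qed.

Lemma ct_rsum M Cb n (G : nat -> (nat -> R) -> R) z :
  (forall j, (j < n)%nat -> ctsat M Cb (G j) z) -> ctsat M Cb (fun w => rsum n (fun j => G j w)) z.
Proof. induction n; intros H; simpl. apply ct_const. apply ct_plus. apply IHn; intros; apply H; lia.
  apply H; lia. Qed.

Lemma pow2_ge n : INR n <= 2 ^ n.
Proof. induction n. simpl; lra. rewrite S_INR. simpl.
  assert (1 <= 2 ^ n) by (apply pow_R1_Rle; lra). lra. Qed.

Lemma small_pow Cb r : 0 < Cb -> 0 < r -> exists n, Cb / 2 ^ n < r.
Proof.
  intros HC Hr. destruct (archimed_cor1 (r / Cb)) as [n [Hn Hn0]].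
  apply Rdiv_lt_0_compat; auto. exists n.
  assert (0 < INR n) by (apply lt_0_INR; auto).
  assert (INR n <= 2 ^ n) by apply pow2_ge.
  assert (Cb / INR n < r).
  { apply (Rmult_lt_reg_r (/ Cb)). apply Rinv_0_lt_compat; auto.
    replace (Cb / INR n * / Cb) with (/ INR n) by (field; lra). unfold Rdiv in Hn. auto. }
  apply Rle_lt_trans with (Cb / INR n); auto.
  unfold Rdiv. apply Rmult_le_compat_l; [lra|]. apply Rinv_le_contravar; auto.
Qed.

Definition inbox (M : nat) (a w : nat -> R) (c : nat -> R) : Prop :=
  forall j, (j < M)%nat -> a j <= c j <= a j + w j.

Definition bad (M : nat) (Cb : R) (g : (nat -> R) -> R) (eps : R) (a w : nat -> R) : Prop :=
  forall del, 0 < del -> exists c c', inbox M a w c /\ in_cube M Cb c /\ in_cube M Cb c' /\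
    (forall j, (j < M)%nat -> Rabs (c' j - c j) < del) /\ eps <= Rabs (g c' - g c).

Lemma bad_ext M Cb g eps a w a' w' : (forall j, (j < M)%nat -> a j = a' j /\ w j = w' j) ->
  bad M Cb g eps a w -> bad M Cb g eps a' w'.
Proof. intros E H d Hd. destruct (H d Hd) as [c [c' [B R1]]]. exists c, c'. split; auto.
  intros j Hj. destruct (E j Hj) as [<- <-]. apply B; auto. Qed.

Lemma split1 M Cb g eps a w k : (k < M)%nat -> bad M Cb g eps a w ->
  exists a', (a' = a \/ a' = upd a k (a k + w k / 2)) /\ bad M Cb g eps a' (upd w k (w k / 2)).
Proof.
  intros Hk H. apply NNPP. intros Hn.
  assert (N1 : ~ bad M Cb g eps a (upd w k (w k / 2))) by (intro B; apply Hn; exists a; auto).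
  assert (N2 : ~ bad M Cb g eps (upd a k (a k + w k / 2)) (upd w k (w k / 2)))
    by (intro B; apply Hn; eexists; split; [right; reflexivity|exact B]).
  unfold bad in N1, N2.
  apply not_all_ex_not in N1. destruct N1 as [d1 N1].
  apply not_all_ex_not in N2. destruct N2 as [d2 N2].
  apply imply_to_and in N1. destruct N1 as [Hd1 N1].
  apply imply_to_and in N2. destruct N2 as [Hd2 N2].
  destruct (H (Rmin d1 d2) (Rmin_pos _ _ Hd1 Hd2)) as [c [c' [B [C1 [C2 [Cl E]]]]]].
  destruct (Rle_dec (c k) (a k + w k / 2)) as [L|L].
  - apply N1. exists c, c'. split; [|split; [auto|split; [auto|split; [|auto]]]].
    + intros j Hj. generalize (B j Hj). unfold upd. destruct (Nat.eqb_spec j k); [subst; lra|auto].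
    + intros j Hj. apply Rlt_le_trans with (Rmin d1 d2); auto. apply Rmin_l.
  - apply N2. exists c, c'. split; [|split; [auto|split; [auto|split; [|auto]]]].
    + intros j Hj. generalize (B j Hj). unfold upd. destruct (Nat.eqb_spec j k); [subst; lra|auto].
    + intros j Hj. apply Rlt_le_trans with (Rmin d1 d2); auto. apply Rmin_r.
Qed.

Lemma splitall M Cb g eps a w0 : 0 <= w0 -> bad M Cb g eps a (fun _ => w0) ->
  forall m, (m <= M)%nat -> exists a', (forall j, (j < m)%nat -> a j <= a' j <= a j + w0 / 2) /\
    (forall j, (m <= j)%nat -> a' j = a j) /\
    bad M Cb g eps a' (fun j => if Nat.ltb j m then w0 / 2 else w0).
Proof.
  intros Hw H m. induction m; intros Hm.
  - exists a. split; [intros; lia|split; [auto|]]. eapply bad_ext; [|exact H]. intros; simpl; auto.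
  - destruct (IHm ltac:(lia)) as [a' [A1 [A2 A3]]].
    destruct (split1 M Cb g eps a' _ m ltac:(lia) A3) as [b2 [Hb B]].
    assert (Wm : (if Nat.ltb m m then w0 / 2 else w0) = w0) by (rewrite Nat.ltb_irrefl; auto).
    rewrite Wm in Hb, B.
    exists b2. split; [|split].
    + intros j Hj. destruct (Nat.eq_dec j m).
      * subst. rewrite (A2 m ltac:(lia)) in Hb. destruct Hb as [-> | ->].
        rewrite A2 by lia; lra. rewrite upd_same. lra.
      * destruct Hb as [-> | ->]. apply A1; lia. rewrite upd_other by auto. apply A1; lia.
    + intros j Hj. destruct Hb as [-> | ->]. apply A2; lia. rewrite upd_other by lia. apply A2; lia.
    + eapply bad_ext; [|exact B]. intros j Hj. split; auto. unfold upd.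
      destruct (Nat.eqb_spec j m).
      * subst. destruct (Nat.ltb_spec m (S m)); auto; lia.
      * destruct (Nat.ltb_spec j m); destruct (Nat.ltb_spec j (S m)); auto; lia.
Qed.

Definition nextbox (M : nat) (Cb : R) (g : (nat -> R) -> R) (eps w : R) (a : nat -> R) : nat -> R :=
  epsilon (inhabits a) (fun a' => (forall j, (j < M)%nat -> a j <= a' j <= a j + w / 2) /\
    (forall j, (M <= j)%nat -> a' j = a j) /\ bad M Cb g eps a' (fun _ => w / 2)).

Fixpoint seqbox (M : nat) (Cb : R) (g : (nat -> R) -> R) (eps : R) (n : nat) : nat -> R :=
  match n with
  | O => fun _ => 0
  | S k => nextbox M Cb g eps (Cb / 2 ^ k) (seqbox M Cb g eps k)
  end.

Lemma heine M Cb g : 0 < Cb -> (forall z, in_cube M Cb z -> ctsat M Cb g z) -> ucont M Cb g.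
Proof.
  intros HC Hg. apply NNPP. intros Hn. unfold ucont in Hn.
  apply not_all_ex_not in Hn. destruct Hn as [eps Hn]. apply imply_to_and in Hn. destruct Hn as [He Hn].
  assert (B0 : bad M Cb g eps (fun _ => 0) (fun _ => Cb)).
  { intros d Hd. apply NNPP. intros N1. apply Hn. exists d. split; auto. intros c c' Hc Hc' Cl.
    apply Rnot_le_lt. intros L. apply N1. exists c, c'.
    split; [intros j Hj; generalize (Hc j Hj); lra|]. split; [auto|split; [auto|split; auto]]. }
  set (S := seqbox M Cb g eps).
  assert (E : forall k, bad M Cb g eps (S k) (fun _ => Cb / 2 ^ k) ->
        exists a', (forall j, (j < M)%nat -> S k j <= a' j <= S k j + Cb / 2 ^ k / 2) /\
        (forall j, (M <= j)%nat -> a' j = S k j) /\ bad M Cb g eps a' (fun _ => Cb / 2 ^ k / 2)).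
  { intros k Bk. destruct (splitall M Cb g eps (S k) (Cb / 2 ^ k) (Rlt_le _ _ (Rdiv_lt_0_compat _ _ HC (pow_lt 2 k ltac:(lra)))) Bk M (le_n _)) as [a' [A1 [A2 A3]]].
    exists a'. split; auto. split; auto. eapply bad_ext; [|exact A3]. intros j Hj.
    split; [reflexivity|]. cbv beta. rewrite (proj2 (Nat.ltb_lt j M) Hj). auto. }
  assert (Step : forall k, bad M Cb g eps (S k) (fun _ => Cb / 2 ^ k) ->
     bad M Cb g eps (S (Datatypes.S k)) (fun _ => Cb / 2 ^ (Datatypes.S k)) /\
     (forall j, (M <= j)%nat -> S (Datatypes.S k) j = S k j) /\
     (forall j, (j < M)%nat -> S k j <= S (Datatypes.S k) j <= S k j + Cb / 2 ^ (Datatypes.S k))).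
  { intros k Bk. pose proof (epsilon_spec (inhabits (S k)) _ (E k Bk)) as [X1 [X2 X3]].
    change (S (Datatypes.S k)) with (nextbox M Cb g eps (Cb / 2 ^ k) (S k)). unfold nextbox.
    assert (Q : Cb / 2 ^ Datatypes.S k = Cb / 2 ^ k / 2) by (simpl; field; apply pow_nonzero; lra).
    rewrite Q. split; [|split; auto]. eapply bad_ext; [|exact X3]. intros; split; reflexivity. }
  assert (SP : forall n, bad M Cb g eps (S n) (fun _ => Cb / 2 ^ n) /\
     (forall j, (M <= j)%nat -> S n j = 0) /\
     (forall j, (j < M)%nat -> S n j <= S (Datatypes.S n) j <= S n j + Cb / 2 ^ (Datatypes.S n))).
  { induction n.
    - assert (B0' : bad M Cb g eps (S 0%nat) (fun _ => Cb / 2 ^ 0)).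
      { eapply bad_ext; [|exact B0]. intros; split; [reflexivity|simpl; field]. }
      split; [exact B0'|split; [intros; reflexivity|]]. apply Step; auto.
    - destruct IHn as [I1 [I2 I3]]. destruct (Step n I1) as [J1 [J2 J3]].
      split; [exact J1|split]. intros j Hj. rewrite J2 by auto. apply I2; auto.
      apply Step; auto. }
  assert (Nest : forall n m j, (j < M)%nat -> S n j <= S (n + m)%nat j /\
      S (n + m)%nat j + Cb / 2 ^ (n + m) <= S n j + Cb / 2 ^ n).
  { intros n m j Hj. induction m.
    - rewrite Nat.add_0_r. lra.
    - destruct IHm as [I1 I2]. destruct (SP (n + m)%nat) as [_ [_ K]]. specialize (K j Hj).
      replace (n + Datatypes.S m)%nat with (Datatypes.S (n + m)) by lia.
      assert (Cb / 2 ^ Datatypes.S (n + m) = Cb / 2 ^ (n + m) / 2) by (simpl; field; apply pow_nonzero; lra).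
      assert (0 < Cb / 2 ^ (n+m)) by (apply Rdiv_lt_0_compat; auto; apply pow_lt; lra).
      split; lra. }
  assert (Bnd : forall j n, 0 <= S n j <= Cb).
  { intros j n. destruct (Nat.lt_ge_cases j M) as [Hj|Hj].
    - destruct (Nest 0%nat n j Hj) as [K1 K2]. replace (0 + n)%nat with n in K1, K2 by lia.
      assert (Z0 : S 0%nat j = 0) by reflexivity. rewrite Z0 in K1, K2.
      replace (Cb / 2 ^ 0) with Cb in K2 by (simpl; field).
      assert (0 < Cb / 2 ^ n) by (apply Rdiv_lt_0_compat; auto; apply pow_lt; lra). lra.
    - destruct (SP n) as [_ [K _]]. rewrite K by auto. lra. }
  assert (Hlub : forall j, {m | is_lub (fun y => exists n, y = S n j) m}).
  { intros j. apply completeness. exists Cb. intros y [n ->]. apply Bnd. exists (S 0%nat j). eauto. }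
  set (z := fun j => proj1_sig (Hlub j)).
  assert (Zp : forall j n, (j < M)%nat -> S n j <= z j <= S n j + Cb / 2 ^ n).
  { intros j n Hj. unfold z. destruct (Hlub j) as [m [U L]]. simpl. split.
    - apply U. eauto.
    - apply L. intros y [k ->]. destruct (Nat.le_gt_cases n k).
      + destruct (Nest n (k - n)%nat j Hj) as [_ K]. replace (n + (k - n))%nat with k in K by lia.
        assert (0 < Cb / 2 ^ k) by (apply Rdiv_lt_0_compat; auto; apply pow_lt; lra). lra.
      + destruct (Nest k (n - k)%nat j Hj) as [K _]. replace (k + (n - k))%nat with n in K by lia.
        assert (0 < Cb / 2 ^ n) by (apply Rdiv_lt_0_compat; auto; apply pow_lt; lra). lra. }
  assert (Zc : in_cube M Cb z).
  { intros j Hj. destruct (Zp j 0%nat Hj) as [K1 K2].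
    assert (Z0 : S 0%nat j = 0) by reflexivity. rewrite Z0 in K1, K2.
    replace (Cb / 2 ^ 0) with Cb in K2 by (simpl; field). lra. }
  destruct (Hg z Zc (eps / 2) ltac:(lra)) as [d0 [Hd0 K0]].
  destruct (small_pow Cb (d0 / 2) HC ltac:(lra)) as [n Hn'].
  destruct (SP n) as [Bn _]. destruct (Bn (d0 / 2) ltac:(lra)) as [c [c' [Bx [Hc [Hc' [Cl EE]]]]]].
  assert (D1 : forall j, (j < M)%nat -> Rabs (c j - z j) < d0).
  { intros j Hj. destruct (Zp j n Hj). destruct (Bx j Hj). apply Rabs_def1; lra. }
  assert (D2 : forall j, (j < M)%nat -> Rabs (c' j - z j) < d0).
  { intros j Hj. destruct (Zp j n Hj). destruct (Bx j Hj). specialize (Cl j Hj).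
    apply Rabs_def2 in Cl. apply Rabs_def1; lra. }
  pose proof (K0 c Hc D1) as A1. pose proof (K0 c' Hc' D2) as A2.
  assert (T := Rabs_triang (g c' - g z) (g z - g c)).
  replace (g c' - g z + (g z - g c)) with (g c' - g c) in T by ring.
  rewrite Rabs_minus_sym in A1. lra.
Qed.

Lemma RInt_minus_R f g a b : ex_RInt f a b -> ex_RInt g a b -> RInt (fun x => f x - g x) a b = RInt f a b - RInt g a b.
Proof. intros. exact (RInt_minus f g a b H H0). Qed.
Lemma ex_RInt_minus_R f g a b : ex_RInt f a b -> ex_RInt g a b -> ex_RInt (fun x => f x - g x) a b.
Proof. intros. exact (ex_RInt_minus f g a b H H0). Qed.
Lemma RInt_scal_R f a b u : ex_RInt f a b -> RInt (fun x => u * f x) a b = u * RInt f a b.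
Proof. intros. exact (RInt_scal f a b u H). Qed.
Lemma ex_RInt_scal_R f a b u : ex_RInt f a b -> ex_RInt (fun x => u * f x) a b.
Proof. intros. exact (ex_RInt_scal f a b u H). Qed.
Lemma RInt_plus_R f g a b : ex_RInt f a b -> ex_RInt g a b -> RInt (fun x => f x + g x) a b = RInt f a b + RInt g a b.
Proof. intros. exact (RInt_plus f g a b H H0). Qed.
Lemma ex_RInt_plus_R f g a b : ex_RInt f a b -> ex_RInt g a b -> ex_RInt (fun x => f x + g x) a b.
Proof. intros. exact (ex_RInt_plus f g a b H H0). Qed.
Lemma RInt_lin f g a b u v : ex_RInt f a b -> ex_RInt g a b -> RInt (fun x => u * f x + v * g x) a b = u * RInt f a b + v * RInt g a b.
Proof. intros. rewrite RInt_plus_R, RInt_scal_R, RInt_scal_R; auto using ex_RInt_scal_R. Qed.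
Lemma RInt_const_R a b (c : R) : RInt (fun _ => c) a b = (b - a) * c.
Proof. exact (RInt_const a b c). Qed.
Lemma ex_RInt_const_R a b (c : R) : ex_RInt (fun _ : R => c) a b.
Proof. exact (ex_RInt_const a b c). Qed.

Definition clamp (Cb t : R) : R := Rmax 0 (Rmin Cb t).

Lemma clamp_in Cb t : 0 <= Cb -> 0 <= clamp Cb t <= Cb.
Proof. intros. unfold clamp, Rmax, Rmin. destruct (Rle_dec Cb t); destruct (Rle_dec 0 _); lra. Qed.
Lemma clamp_id Cb t : 0 <= t <= Cb -> clamp Cb t = t.
Proof. intros. unfold clamp, Rmax, Rmin. destruct (Rle_dec Cb t); destruct (Rle_dec 0 _); lra. Qed.
Lemma clamp_lip Cb s t : Rabs (clamp Cb s - clamp Cb t) <= Rabs (s - t).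
Proof. unfold clamp, Rmax, Rmin.
  destruct (Rle_dec Cb s); destruct (Rle_dec Cb t); repeat destruct (Rle_dec 0 _);
  unfold Rabs; repeat destruct Rcase_abs; lra. Qed.

Lemma ex_RInt_slice M Cb G c k : 0 < Cb -> ucont M Cb G -> in_cube M Cb c ->
  ex_RInt (fun t => G (upd c k t)) 0 Cb.
Proof.
  intros HC HG Hc.
  apply (ex_RInt_ext (fun t => G (upd c k (clamp Cb t)))).
  { intros x Hx. rewrite Rmin_left in Hx by lra. rewrite Rmax_right in Hx by lra.
    rewrite clamp_id by lra. auto. }
  apply (@ex_RInt_continuous R_CompleteNormedModule). intros z _. apply continuity_pt_filterlim.
  intros e He. destruct (HG e He) as [d [Hd K]]. exists d. split; auto.
  intros x [_ Hx]. simpl in Hx. unfold Rdist in Hx. simpl. unfold Rdist.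
  apply K; try (apply in_cube_upd; auto; apply clamp_in; lra).
  intros j Hj. unfold upd. destruct (Nat.eqb j k).
  - eapply Rle_lt_trans; [apply clamp_lip|auto].
  - replace (c j - c j) with 0 by ring. rewrite Rabs_R0; auto.
Qed.

Lemma iint_ucont M Cb g : 0 < Cb -> ucont M Cb g -> forall k, (k <= M)%nat -> ucont M Cb (iint k Cb g).
Proof.
  intros HC Hg k. induction k; intros Hk; simpl; auto.
  specialize (IHk ltac:(lia)).
  intros e He. destruct (IHk (e / (2 * Cb))) as [d [Hd K]].
  { apply Rdiv_lt_0_compat; lra. }
  exists d. split; auto. intros c c' Hc Hc' Cl.
  rewrite !Rint_RInt by (apply (ex_RInt_slice M); auto).
  rewrite <- RInt_minus_R by (apply (ex_RInt_slice M); auto).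
  eapply Rle_lt_trans. apply abs_RInt_le_const with (M := e / (2 * Cb)); [lra| |].
  - apply ex_RInt_minus_R; apply (ex_RInt_slice M); auto.
  - intros t Ht. left. apply K; try (apply in_cube_upd; auto).
    intros j Hj. unfold upd. destruct (Nat.eqb j k). replace (t - t) with 0 by ring.
    rewrite Rabs_R0; auto. apply Cl; auto.
  - replace ((Cb - 0) * (e / (2 * Cb))) with (e / 2) by (field; lra). lra.
Qed.

Lemma iint_ext M Cb g1 g2 : 0 < Cb -> (forall c, in_cube M Cb c -> g1 c = g2 c) ->
  forall k c, (k <= M)%nat -> in_cube M Cb c -> iint k Cb g1 c = iint k Cb g2 c.
Proof.
  intros HC E k. induction k; intros c Hk Hc; simpl; auto.
  apply Rint_ext; [lra|]. intros t Ht. apply IHk; [lia|]. apply in_cube_upd; auto.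
Qed.

Lemma iint_lin M Cb g1 g2 a b : 0 < Cb -> ucont M Cb g1 -> ucont M Cb g2 ->
  forall k c, (k <= M)%nat -> in_cube M Cb c ->
  iint k Cb (fun w => a * g1 w + b * g2 w) c = a * iint k Cb g1 c + b * iint k Cb g2 c.
Proof.
  intros HC H1 H2 k. induction k; intros c Hk Hc; simpl; auto.
  rewrite (Rint_ext _ (fun t => a * iint k Cb g1 (upd c k t) + b * iint k Cb g2 (upd c k t))).
  2: lra. 2: { intros t Ht. apply IHk; [lia|]. apply in_cube_upd; auto. }
  assert (E1 := ex_RInt_slice M Cb (iint k Cb g1) c k HC (iint_ucont M Cb g1 HC H1 k ltac:(lia)) Hc).
  assert (E2 := ex_RInt_slice M Cb (iint k Cb g2) c k HC (iint_ucont M Cb g2 HC H2 k ltac:(lia)) Hc).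
  rewrite !Rint_RInt; auto. apply RInt_lin; auto.
  apply ex_RInt_plus_R; apply ex_RInt_scal_R; auto.
Qed.

Lemma iint_mono M Cb g1 g2 : 0 < Cb -> ucont M Cb g1 -> ucont M Cb g2 ->
  (forall c, in_cube M Cb c -> g1 c <= g2 c) ->
  forall k c, (k <= M)%nat -> in_cube M Cb c -> iint k Cb g1 c <= iint k Cb g2 c.
Proof.
  intros HC H1 H2 L k. induction k; intros c Hk Hc; simpl; auto.
  assert (E1 := ex_RInt_slice M Cb (iint k Cb g1) c k HC (iint_ucont M Cb g1 HC H1 k ltac:(lia)) Hc).
  assert (E2 := ex_RInt_slice M Cb (iint k Cb g2) c k HC (iint_ucont M Cb g2 HC H2 k ltac:(lia)) Hc).
  rewrite !Rint_RInt; auto. apply RInt_le; auto. lra.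
  intros t Ht. apply IHk; [lia|]. apply in_cube_upd; auto. lra.
Qed.

Lemma iint_indep Cb g : 0 < Cb -> forall k c, (forall c j t, (j < k)%nat -> g (upd c j t) = g c) ->
  iint k Cb g c = Cb ^ k * g c.
Proof.
  intros HC k. induction k; intros c H; simpl. ring.
  rewrite (Rint_ext _ (fun _ => Cb ^ k * g c)). 2: lra.
  2: { intros t Ht. rewrite IHk. rewrite H; auto. intros; apply H; lia. }
  rewrite Rint_RInt by apply ex_RInt_const_R. rewrite RInt_const_R. ring.
Qed.

Lemma iint_const Cb a k c : 0 < Cb -> iint k Cb (fun _ => a) c = Cb ^ k * a.
Proof. intros HC. apply (iint_indep Cb (fun _ => a) HC). auto. Qed.

Lemma ucont_const M Cb a : ucont M Cb (fun _ => a).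
Proof. intros e He. exists 1. split; [lra|]. intros. replace (a - a) with 0 by ring. rewrite Rabs_R0; lra. Qed.

Lemma ucont_lin M Cb g1 g2 a b : ucont M Cb g1 -> ucont M Cb g2 ->
  ucont M Cb (fun w => a * g1 w + b * g2 w).
Proof.
  intros H1 H2 e He.
  destruct (H1 (e / (2 * (Rabs a + 1)))) as [d1 [Hd1 K1]].
  { apply Rdiv_lt_0_compat; [lra|]. assert (0 <= Rabs a) by apply Rabs_pos. lra. }
  destruct (H2 (e / (2 * (Rabs b + 1)))) as [d2 [Hd2 K2]].
  { apply Rdiv_lt_0_compat; [lra|]. assert (0 <= Rabs b) by apply Rabs_pos. lra. }
  exists (Rmin d1 d2). split; [apply Rmin_pos; auto|]. intros c c' Hc Hc' Cl.
  assert (A1 := K1 c c' Hc Hc' (fun j Hj => Rlt_le_trans _ _ _ (Cl j Hj) (Rmin_l _ _))).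
  assert (A2 := K2 c c' Hc Hc' (fun j Hj => Rlt_le_trans _ _ _ (Cl j Hj) (Rmin_r _ _))).
  replace (a * g1 c' + b * g2 c' - (a * g1 c + b * g2 c)) with (a * (g1 c' - g1 c) + b * (g2 c' - g2 c)) by ring.
  eapply Rle_lt_trans; [apply Rabs_triang|]. rewrite !Rabs_mult.
  assert (0 <= Rabs a) by apply Rabs_pos. assert (0 <= Rabs b) by apply Rabs_pos.
  assert (Rabs a * Rabs (g1 c' - g1 c) <= e / 2).
  { apply Rle_trans with (Rabs a * (e / (2 * (Rabs a + 1)))). apply Rmult_le_compat_l; lra.
    apply (Rmult_le_reg_r (2 * (Rabs a + 1))). lra. field_simplify; [|lra]. nra. }
  assert (Rabs b * Rabs (g2 c' - g2 c) <= e / 2).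
  { apply Rle_trans with (Rabs b * (e / (2 * (Rabs b + 1)))). apply Rmult_le_compat_l; lra.
    apply (Rmult_le_reg_r (2 * (Rabs b + 1))). lra. field_simplify; [|lra]. nra. }
  assert (Rabs a * Rabs (g1 c' - g1 c) < e / 2 \/ Rabs b * Rabs (g2 c' - g2 c) < e / 2).
  { destruct (Req_dec (Rabs a) 0) as [Z|Z]. left. rewrite Z. lra.
    left. apply Rlt_le_trans with (Rabs a * (e / (2 * (Rabs a + 1)))). apply Rmult_lt_compat_l; lra.
    apply (Rmult_le_reg_r (2 * (Rabs a + 1))). lra. field_simplify; [|lra]. nra. }
  lra.
Qed.

Lemma ucont_bounded M Cb g : 0 < Cb -> ucont M Cb g -> exists B, forall c, in_cube M Cb c -> Rabs (g c) <= B.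
Proof.
  intros HC Hg. destruct (Hg 1 ltac:(lra)) as [d [Hd K]].
  destruct (archimed_cor1 (d / Cb)) as [n [Hn Hn0]]. apply Rdiv_lt_0_compat; auto.
  exists (Rabs (g (fun _ => 0)) + INR n). intros c Hc.
  assert (Hnp : 0 < INR n) by (apply lt_0_INR; auto).
  set (p := fun k : nat => fun j => INR k / INR n * c j).
  assert (Pc : forall k, (k <= n)%nat -> in_cube M Cb (p k)).
  { intros k Hk j Hj. unfold p. destruct (Hc j Hj). assert (0 <= INR k <= INR n).
    split; [apply pos_INR|apply le_INR; auto].
    assert (0 <= INR k / INR n <= 1). split. apply Rdiv_le_0_compat; lra.
    apply (Rmult_le_reg_r (INR n)); auto. field_simplify; lra. nra. }
  assert (Ind : forall k, (k <= n)%nat -> Rabs (g (p k)) <= Rabs (g (fun _ => 0)) + INR k).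
  { induction k; intros Hk.
    - simpl. replace (p 0%nat) with (fun _ : nat => 0). lra.
      apply functional_extensionality. intros j. unfold p. simpl. field. lra.
    - specialize (IHk ltac:(lia)). rewrite S_INR.
      assert (Rabs (g (p (S k)) - g (p k)) < 1).
      { apply K; [apply Pc; lia|apply Pc; lia|]. intros j Hj. unfold p. rewrite S_INR.
        replace ((INR k + 1) / INR n * c j - INR k / INR n * c j) with (c j / INR n) by (field; lra).
        destruct (Hc j Hj). rewrite Rabs_right. 2: apply Rle_ge, Rdiv_le_0_compat; lra.
        apply Rle_lt_trans with (Cb / INR n). unfold Rdiv. apply Rmult_le_compat_r; auto.
        left; apply Rinv_0_lt_compat; auto.
        apply (Rmult_lt_reg_r (/ Cb)). apply Rinv_0_lt_compat; auto.
        replace (Cb / INR n * / Cb) with (/ INR n) by (field; lra). unfold Rdiv in Hn. auto. }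
      assert (T := Rabs_triang (g (p (S k)) - g (p k)) (g (p k))).
      replace (g (p (S k)) - g (p k) + g (p k)) with (g (p (S k))) in T by ring. lra. }
  replace c with (p n). apply Ind; auto.
  apply functional_extensionality. intros j. unfold p. field. lra.
Qed.

Lemma iint_abs_le M Cb g B : 0 < Cb -> ucont M Cb g -> (forall c, in_cube M Cb c -> Rabs (g c) <= B) ->
  forall k c, (k <= M)%nat -> in_cube M Cb c -> Rabs (iint k Cb g c) <= Cb ^ k * B.
Proof.
  intros HC Hg HB k c Hk Hc.
  assert (HB' : forall c, in_cube M Cb c -> - B <= g c <= B).
  { intros c0 H0. specialize (HB c0 H0). unfold Rabs in HB. destruct Rcase_abs in HB; lra. }
  assert (L1 := iint_mono M Cb g (fun _ => B) HC Hg (ucont_const _ _ _)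
    (fun c Hc => proj2 (HB' c Hc)) k c Hk Hc).
  assert (L2 := iint_mono M Cb (fun _ => - B) g HC (ucont_const _ _ _) Hg
    (fun c Hc => proj1 (HB' c Hc)) k c Hk Hc).
  rewrite iint_const in L1, L2 by auto. apply Rabs_le. lra.
Qed.

Lemma iint_slab M Cb g m r : 0 < Cb -> ucont M Cb g -> (m < M)%nat ->
  (forall c j t, (j < m)%nat -> g (upd c j t) = g c) ->
  (forall c, in_cube M Cb c -> RInt (fun t => g (upd c m t)) 0 Cb <= r) ->
  forall d c, (S m + d <= M)%nat -> in_cube M Cb c -> iint (S m + d) Cb g c <= Cb ^ (m + d) * r.
Proof.
  intros HC Hg Hm Hind Hr d. induction d; intros c Hd Hc.
  - replace (S m + 0)%nat with (S m) by lia. replace (m + 0)%nat with m by lia. simpl.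
    rewrite (Rint_ext _ (fun t => Cb ^ m * g (upd c m t))). 2: lra.
    2: { intros t Ht. apply iint_indep; auto. }
    assert (E := ex_RInt_slice M Cb g c m HC Hg Hc).
    rewrite Rint_RInt by (apply ex_RInt_scal_R; auto). rewrite RInt_scal_R by auto.
    apply Rmult_le_compat_l. apply pow_le; lra. auto.
  - replace (S m + S d)%nat with (S (S m + d)) by lia. simpl iint.
    assert (U := iint_ucont M Cb g HC Hg (S m + d) ltac:(lia)).
    assert (E := ex_RInt_slice M Cb _ c (S m + d) HC U Hc).
    rewrite Rint_RInt by auto.
    apply Rle_trans with (RInt (fun _ => Cb ^ (m + d) * r) 0 Cb).
    + apply RInt_le; auto. lra. apply ex_RInt_const_R.
      intros t Ht. apply IHd. lia. apply in_cube_upd; auto; lra.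
    + rewrite RInt_const_R. replace (m + S d)%nat with (S (m + d)) by lia. simpl. lra.
Qed.

Lemma Rdiv_le_0_compat a b : 0 <= a -> 0 < b -> 0 <= a / b.
Proof. intros. unfold Rdiv. apply Rmult_le_pos; auto. left; apply Rinv_0_lt_compat; auto. Qed.

Definition Psi (lam A P s : R) : R :=
  if Req_EM_T (P + Rmax s 0) 0 then 0
  else lam * Rmax (A + s) 0 * Rmax s 0 / (P + Rmax s 0).

Definition Fv (lam A P x : R) : R := lam * (x - (P - A) + (P - A) * P / (x + P)).

Lemma Rmax_l0 x : 0 <= x -> Rmax x 0 = x.
Proof. intros; unfold Rmax; destruct Rle_dec; lra. Qed.
Lemma Rmax_r0 x : x <= 0 -> Rmax x 0 = 0.
Proof. intros; unfold Rmax; destruct Rle_dec; lra. Qed.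

Lemma Psi_zero lam A P s : 0 <= P -> s <= Rmax 0 (- A) -> Psi lam A P s = 0.
Proof.
  intros HP Hs. unfold Psi. destruct Req_EM_T; auto.
  unfold Rmax in Hs. destruct (Rle_dec 0 (-A)).
  - destruct (Rle_dec s 0). rewrite (Rmax_r0 s) by lra. unfold Rdiv. ring.
    rewrite (Rmax_r0 (A + s)) by lra. unfold Rdiv; ring.
  - rewrite (Rmax_r0 s) by lra. unfold Rdiv. ring.
Qed.

Lemma Psi_nonneg lam A P s : 0 < lam -> 0 <= P -> 0 <= Psi lam A P s.
Proof.
  intros Hl HP. unfold Psi. destruct Req_EM_T; [lra|].
  assert (0 <= Rmax s 0) by (unfold Rmax; destruct Rle_dec; lra).
  assert (0 <= Rmax (A + s) 0) by (unfold Rmax; destruct Rle_dec; lra).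
  apply Rdiv_le_0_compat. apply Rmult_le_pos; [|auto]. apply Rmult_le_pos; lra. lra.
Qed.

Lemma Psi_F lam A P s : 0 <= P -> A <= P -> Rmax 0 (- A) < s -> Psi lam A P s = Fv lam A P s.
Proof.
  intros HP HA Hs. assert (0 < s /\ 0 < A + s) by (unfold Rmax in Hs; destruct Rle_dec; lra).
  unfold Psi, Fv. rewrite (Rmax_l0 s), (Rmax_l0 (A + s)) by lra.
  destruct Req_EM_T. lra. field. lra.
Qed.

Lemma Fv_kappa lam A P : 0 <= P -> A <= P -> Fv lam A P (Rmax 0 (- A)) = 0.
Proof.
  intros HP HA. unfold Fv, Rmax. destruct (Rle_dec 0 (-A)).
  - destruct (Req_dec (-A) 0).
    + assert (A = 0) by lra. subst. destruct (Req_dec P 0). subst. unfold Rdiv; ring. field. lra.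
    + field. lra.
  - destruct (Req_dec P 0). assert (A = 0) by lra. subst. unfold Rdiv; ring. field. lra.
Qed.

Lemma Psi_Fv lam A P s : 0 <= P -> A <= P -> Rmax 0 (- A) <= s -> Psi lam A P s = Fv lam A P s.
Proof.
  intros HP HA Hs. destruct (Rle_lt_or_eq_dec _ _ Hs) as [L|E].
  - apply Psi_F; auto.
  - subst. rewrite Psi_zero by lra. rewrite Fv_kappa; auto.
Qed.

Lemma BP_le A P x y : 0 <= P -> A <= P -> Rmax 0 (- A) <= x -> Rmax 0 (- A) <= y ->
  (P - A) * P <= (x + P) * (y + P).
Proof.
  intros HP HA Hx Hy. unfold Rmax in *. destruct (Rle_dec 0 (-A)); nra.
Qed.

Lemma Fv_diff lam A P x y : 0 < lam -> 0 <= P -> A <= P -> Rmax 0 (- A) <= x -> x <= y ->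
  0 <= Fv lam A P y - Fv lam A P x <= lam * (y - x).
Proof.
  intros Hl HP HA Hx Hxy.
  assert (Hk : 0 <= Rmax 0 (- A)) by (unfold Rmax; destruct Rle_dec; lra).
  destruct (Req_dec P 0) as [Z|Z].
  - subst. unfold Fv. replace ((0 - A) * 0 / (y + 0)) with 0 by (unfold Rdiv; ring).
    replace ((0 - A) * 0 / (x + 0)) with 0 by (unfold Rdiv; ring). nra.
  - assert (B := BP_le A P x y HP HA Hx ltac:(lra)).
    assert (0 < x + P) by lra. assert (0 < y + P) by lra.
    unfold Fv.
    replace (lam * (y - (P - A) + (P - A) * P / (y + P)) - lam * (x - (P - A) + (P - A) * P / (x + P)))
      with (lam * (y - x) * (1 - (P - A) * P / ((x + P) * (y + P)))) by (field; lra).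
    assert (0 <= (P - A) * P / ((x + P) * (y + P)) <= 1).
    { split. apply Rdiv_le_0_compat; nra. apply (Rmult_le_reg_r ((x + P) * (y + P))). nra.
      field_simplify; nra. }
    set (q := (P - A) * P / ((x + P) * (y + P))) in *.
    assert (0 <= lam * (y - x)) by (apply Rmult_le_pos; lra).
    assert (0 <= lam * (y - x) * q) by (apply Rmult_le_pos; lra).
    split. apply Rmult_le_pos; lra. lra.
Qed.

Lemma Psi_monolip lam A P s1 s2 : 0 < lam -> 0 <= P -> A <= P -> s1 <= s2 ->
  0 <= Psi lam A P s2 - Psi lam A P s1 <= lam * (s2 - s1).
Proof.
  intros Hl HP HA H12. set (k := Rmax 0 (- A)).
  destruct (Rle_dec s2 k).
  - rewrite !Psi_zero by (auto; unfold k in *; lra). replace (0 - 0) with 0 by ring. split; [lra|]. apply Rmult_le_pos; lra.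
  - destruct (Rle_dec s1 k).
    + rewrite (Psi_zero _ _ _ s1) by (auto; unfold k in *; lra). rewrite Psi_Fv by (auto; unfold k in *; lra).
      assert (D := Fv_diff lam A P k s2 Hl HP HA (Rle_refl _) ltac:(lra)).
      unfold k in D. rewrite Fv_kappa in D by auto. fold k in D. assert (lam * (s2 - k) <= lam * (s2 - s1)) by (apply Rmult_le_compat_l; lra). lra.
    + rewrite !Psi_Fv by (auto; unfold k in *; lra). apply Fv_diff; auto. unfold k in *; lra.
Qed.

(* tangent line at y0 = m + P *)
Definition tang (lam A P y0 r : R) : R := lam * (r - (P - A) + (P - A) * P * (2 / y0 - (r + P) / (y0 * y0))).

Lemma tang_le lam A P m r : 0 < lam -> 0 <= P -> A <= P -> Rmax 0 (- A) < m ->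
  tang lam A P (m + P) r <= Psi lam A P r.
Proof.
  intros Hl HP HA Hm. set (k := Rmax 0 (- A)) in *.
  assert (Hk : 0 <= k) by (unfold k, Rmax; destruct Rle_dec; lra).
  assert (Hy : 0 < m + P) by lra.
  assert (Key : forall r, k <= r -> tang lam A P (m + P) r <= Psi lam A P r).
  { intros r0 Hr. rewrite Psi_Fv by (auto; unfold k in *; lra). unfold tang, Fv.
    destruct (Req_dec P 0) as [Z|Z].
    - subst. replace ((0 - A) * 0 / (r0 + 0)) with 0 by (unfold Rdiv; ring). nra.
    - assert (0 < r0 + P) by lra.
      assert (0 <= (P - A) * P) by nra.
      assert (EQ : lam * (r0 - (P - A) + (P - A) * P / (r0 + P)) -
               lam * (r0 - (P - A) + (P - A) * P * (2 / (m + P) - (r0 + P) / ((m + P) * (m + P))))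
        = (lam * ((P - A) * P) * ((m - r0) * (m - r0) / ((r0 + P) * ((m + P) * (m + P)))))) by (field; lra).
      assert (0 <= (m - r0) * (m - r0) / ((r0 + P) * ((m + P) * (m + P)))).
      { apply Rdiv_le_0_compat. apply Rle_0_sqr. apply Rmult_lt_0_compat; [lra|apply Rmult_lt_0_compat; lra]. }
      assert (0 <= lam * ((P - A) * P) * ((m - r0) * (m - r0) / ((r0 + P) * ((m + P) * (m + P))))).
      { apply Rmult_le_pos; [apply Rmult_le_pos; lra|auto]. }
      lra. }
  destruct (Rle_dec k r). apply Key; auto.
  rewrite Psi_zero by (auto; unfold k in *; lra).
  assert (K := Key k (Rle_refl _)). rewrite Psi_zero in K by (auto; unfold k in *; lra).
  assert (B := BP_le A P k k HP HA (Rle_refl _) (Rle_refl _)).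
  assert (tang lam A P (m + P) r <= tang lam A P (m + P) k); [|lra].
  unfold tang.
  assert (EQ : lam * (k - (P - A) + (P - A) * P * (2 / (m + P) - (k + P) / ((m + P) * (m + P)))) -
    lam * (r - (P - A) + (P - A) * P * (2 / (m + P) - (r + P) / ((m + P) * (m + P))))
    = (lam * (k - r) * (1 - (P - A) * P / ((m + P) * (m + P))))) by (field; lra).
  assert ((P - A) * P / ((m + P) * (m + P)) <= 1).
  { apply (Rmult_le_reg_r ((m + P) * (m + P))). nra. field_simplify; nra. }
  assert (0 <= lam * (k - r) * (1 - (P - A) * P / ((m + P) * (m + P)))).
  { apply Rmult_le_pos; nra. }
  lra.
Qed.

Lemma tang_eq lam A P m : 0 <= P -> A <= P -> Rmax 0 (- A) < m ->
  tang lam A P (m + P) m = Psi lam A P m.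
Proof.
  intros HP HA Hm. assert (0 <= Rmax 0 (- A)) by (unfold Rmax; destruct Rle_dec; lra).
  rewrite Psi_Fv by (auto; lra). unfold tang, Fv. field. lra.
Qed.

Lemma Psi_convex lam A P s t l : 0 < lam -> 0 <= P -> A <= P -> 0 <= l <= 1 ->
  Psi lam A P (l * s + (1 - l) * t) <= l * Psi lam A P s + (1 - l) * Psi lam A P t.
Proof.
  intros Hl HP HA Hl1. set (m := l * s + (1 - l) * t).
  assert (N1 := Psi_nonneg lam A P s Hl HP). assert (N2 := Psi_nonneg lam A P t Hl HP).
  destruct (Rle_dec m (Rmax 0 (- A))).
  - rewrite Psi_zero by auto. nra.
  - rewrite <- tang_eq by (auto; lra).
    assert (T1 := tang_le lam A P m s Hl HP HA ltac:(lra)).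
    assert (T2 := tang_le lam A P m t Hl HP HA ltac:(lra)).
    assert (E : tang lam A P (m + P) m = l * tang lam A P (m + P) s + (1 - l) * tang lam A P (m + P) t).
    { change (tang lam A P (m + P) (l * s + (1 - l) * t) = l * tang lam A P (m + P) s + (1 - l) * tang lam A P (m + P) t).
      generalize (m + P). intros y0. unfold tang, Rdiv. ring. }
    rewrite E. nra.
Qed.

Definition Lz (d y : R) : R := d * d / (d * d + y * y).

Lemma Lz_nonneg d y : 0 < d -> 0 <= Lz d y.
Proof. intros. unfold Lz. apply Rdiv_le_0_compat; nra. Qed.

Lemma Lz_half d y : 0 < d -> Rabs y <= d -> 1 <= 2 * Lz d y.
Proof. intros Hd Hy. unfold Lz.
  assert (y * y <= d * d). { unfold Rabs in Hy; destruct Rcase_abs in Hy; nra. }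
  apply (Rmult_le_reg_r (d * d + y * y)). nra. field_simplify; nra. Qed.

Lemma Psi_d2 lam A P s h d : 0 < lam -> 0 <= P -> A <= P -> 0 < h -> h <= d ->
  Psi lam A P (s + h) + Psi lam A P (s - h) - 2 * Psi lam A P s <=
  lam * h * (2 * Lz d s + 2 * Lz d (s + A)) + 2 * lam * h * h / d.
Proof.
  intros Hl HP HA Hh Hd.
  assert (L1 := Lz_nonneg d s ltac:(lra)). assert (L2 := Lz_nonneg d (s + A) ltac:(lra)).
  assert (R0 : 0 <= 2 * lam * h * h / d) by (apply Rdiv_le_0_compat; [|lra]; apply Rmult_le_pos; [|lra]; apply Rmult_le_pos; lra).
  assert (R1 : 0 <= lam * h * (2 * Lz d s + 2 * Lz d (s + A))) by (apply Rmult_le_pos; [apply Rmult_le_pos|]; lra).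
  assert (G : Psi lam A P (s + h) + Psi lam A P (s - h) - 2 * Psi lam A P s <= lam * h).
  { assert (M1 := Psi_monolip lam A P s (s + h) Hl HP HA ltac:(lra)).
    assert (M2 := Psi_monolip lam A P (s - h) s Hl HP HA ltac:(lra)).
    replace (s + h - s) with h in M1 by ring. lra. }
  assert (Hlh : 0 < lam * h) by (apply Rmult_lt_0_compat; lra).
  set (k := Rmax 0 (- A)) in *.
  assert (Hk : 0 <= k) by (unfold k, Rmax; destruct Rle_dec; lra).
  destruct (Rle_dec (s + h) k).
  - rewrite !Psi_zero by (auto; unfold k in *; lra). lra.
  - destruct (Rle_dec k (s - h)).
    + rewrite !Psi_Fv by (auto; unfold k in *; lra).
      destruct (Req_dec P 0) as [Z|Z].
      * subst. unfold Fv. unfold Rdiv. rewrite !Rmult_0_r. rewrite !Rmult_0_l. lra.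
      * assert (HP' : 0 < P) by (destruct HP as [HP'|HP']; [exact HP'|exfalso; apply Z; symmetry; exact HP']).
        assert (D1 : 0 < s + P) by lra. assert (D2 : 0 < s + h + P) by lra. assert (D3 : 0 < s - h + P) by lra.
        assert (BP := BP_le A P (s - h) s HP HA ltac:(unfold k in *; lra) ltac:(unfold k in *; lra)).
        set (X := (P - A) * P / ((s - h + P) * (s + P))).
        assert (HX : 0 <= X <= 1).
        { unfold X. split. apply Rdiv_le_0_compat; nra. apply (Rmult_le_reg_r ((s - h + P) * (s + P))). nra.
          field_simplify; nra. }
        assert (EQ : Fv lam A P (s + h) + Fv lam A P (s - h) - 2 * Fv lam A P s = lam * (2 * h * h) * X / (s + h + P)).
        { unfold Fv, X. field. lra. }
        rewrite EQ.
        destruct (Rle_dec d s).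
        -- apply Rle_trans with (2 * lam * h * h / d); [|lra].
           apply Rle_trans with (lam * (2 * h * h) / (s + h + P)).
           ++ unfold Rdiv. apply Rmult_le_compat_r. left; apply Rinv_0_lt_compat; lra.
              assert (0 <= lam * (2 * h * h)) by (apply Rmult_le_pos; nra). nra.
           ++ replace (2 * lam * h * h / d) with (lam * (2 * h * h) / d) by (field; lra).
              unfold Rdiv. apply Rmult_le_compat_l. apply Rmult_le_pos; nra.
              apply Rinv_le_contravar; lra.
        -- assert (1 <= 2 * Lz d s) by (apply Lz_half; [lra|]; rewrite Rabs_right by lra; lra).
           rewrite <- EQ. assert (lam * h <= lam * h * (2 * Lz d s)) by (rewrite <- (Rmult_1_r (lam * h)) at 1; apply Rmult_le_compat_l; lra).
           assert (0 <= lam * h * (2 * Lz d (s + A))) by (apply Rmult_le_pos; lra).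
           rewrite <- !Psi_Fv in * by (auto; unfold k in *; lra).
           assert (lam * h * (2 * Lz d s + 2 * Lz d (s + A)) = lam * h * (2 * Lz d s) + lam * h * (2 * Lz d (s + A))) by ring.
           lra.
    + assert (lam * h <= lam * h * (2 * Lz d s + 2 * Lz d (s + A))); [|lra].
      rewrite <- (Rmult_1_r (lam * h)) at 1. apply Rmult_le_compat_l; [lra|].
      unfold k, Rmax in *. destruct (Rle_dec 0 (- A)).
      * assert (1 <= 2 * Lz d (s + A)) by (apply Lz_half; [lra|]; apply Rabs_le; lra). lra.
      * assert (1 <= 2 * Lz d s) by (apply Lz_half; [lra|]; apply Rabs_le; lra). lra.
Qed.


Definition chsl (g : R -> R) (a b : R) : R := (g b - g a) / (b - a).

Lemma three_chord g C a m b : convex_on g 0 C -> 0 <= a -> a < m -> m < b -> b <= C ->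
  chsl g a m <= chsl g a b /\ chsl g a b <= chsl g m b.
Proof.
  intros Hc Ha Ham Hmb Hb.
  set (l := (b - m) / (b - a)).
  assert (Hl : 0 <= l <= 1).
  { unfold l. split. apply Rmult_le_pos; [lra|]. left; apply Rinv_0_lt_compat; lra.
    apply (Rmult_le_reg_r (b - a)). lra. field_simplify; lra. }
  assert (Em : l * a + (1 - l) * b = m) by (unfold l; field; lra).
  assert (K := Hc a b l ltac:(lra) ltac:(lra) Hl). rewrite Em in K.
  assert (E1 : 1 - l = (m - a) / (b - a)) by (unfold l; field; lra).
  unfold chsl. split.
  - apply (Rmult_le_reg_r (m - a)). lra.
    replace ((g m - g a) / (m - a) * (m - a)) with (g m - g a) by (field; lra).
    replace ((g b - g a) / (b - a) * (m - a)) with ((1 - l) * (g b - g a)) by (rewrite E1; field; lra).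
    nra.
  - apply (Rmult_le_reg_r (b - m)). lra.
    replace ((g b - g m) / (b - m) * (b - m)) with (g b - g m) by (field; lra).
    replace ((g b - g a) / (b - a) * (b - m)) with (l * (g b - g a)) by (unfold l; field; lra).
    nra.
Qed.

Lemma sig_le_chain g C a b c d : convex_on g 0 C -> 0 <= a -> a < b -> b <= c -> c < d -> d <= C ->
  chsl g a b <= chsl g c d.
Proof.
  intros Hc Ha Hab Hbc Hcd Hd.
  destruct (Rle_lt_or_eq_dec _ _ Hbc) as [L|E].
  - destruct (three_chord g C a b d Hc Ha Hab ltac:(lra) Hd) as [X1 X2].
    destruct (three_chord g C b c d Hc ltac:(lra) L Hcd Hd) as [Y1 Y2]. lra.
  - subst c. destruct (three_chord g C a b d Hc Ha Hab Hcd Hd). lra.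
Qed.

Lemma deriv_exists g C : 0 < C -> convex_on g 0 C ->
  (forall t, 0 < t < C -> forall eps, 0 < eps -> exists eta, 0 < eta /\ forall h, 0 < h < eta ->
     0 <= t - h -> t + h <= C -> g (t + h) + g (t - h) - 2 * g t <= eps * h) ->
  forall t, 0 < t < C -> exists l, derivable_pt_lim g t l.
Proof.
  intros HC Hc Hd t Ht.
  set (E := fun y => exists h, 0 < h <= t /\ y = chsl g (t - h) t).
  assert (Hb : bound E).
  { exists (chsl g t C). intros y [h [Hh ->]]. apply (sig_le_chain g C _ _ _ _ Hc); lra. }
  destruct (completeness E Hb) as [l [U Lb]]. { exists (chsl g 0 t). exists t. split; [split; lra|]. unfold chsl; replace (t - t) with 0 by ring; reflexivity. }
  exists l. intros eps He.
  destruct (Hd t Ht (eps / 2) ltac:(lra)) as [eta [Heta K]].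
  set (del := Rmin eta (Rmin t (C - t))).
  assert (Hdel : 0 < del) by (unfold del; repeat apply Rmin_pos; lra).
  exists (mkposreal del Hdel). intros h Hh0 Hh. simpl in Hh.
  assert (Hd1 : del <= eta) by apply Rmin_l.
  assert (Hd2 : del <= t) by (unfold del; eapply Rle_trans; [apply Rmin_r|apply Rmin_l]).
  assert (Hd3 : del <= C - t) by (unfold del; eapply Rle_trans; [apply Rmin_r|apply Rmin_r]).
  assert (Ha := Rabs_def2 _ _ Hh).
  assert (Rgt : forall h', 0 < h' -> t + h' <= C -> l <= chsl g t (t + h')).
  { intros h' H1 H2. apply Lb. intros y [k [Hk ->]]. apply (sig_le_chain g C _ _ _ _ Hc); lra. }
  assert (Lft : forall h', 0 < h' <= t -> chsl g (t - h') t <= l).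
  { intros h' H1. apply U. exists h'. auto. }
  assert (D2 : forall h', 0 < h' < del -> chsl g t (t + h') - chsl g (t - h') t <= eps / 2).
  { intros h' H1. unfold chsl. replace (t + h' - t) with h' by ring. replace (t - (t - h')) with h' by ring.
    assert (K' := K h' ltac:(lra) ltac:(lra) ltac:(lra)).
    apply (Rmult_le_reg_r h'). lra. field_simplify; try lra. }
  destruct (Rlt_or_le 0 h) as [P|N].
  - assert (Q : (g (t + h) - g t) / h = chsl g t (t + h)) by (unfold chsl; f_equal; ring).
    rewrite Q. assert (R1 := Rgt h P ltac:(lra)). assert (R2 := Lft h ltac:(lra)).
    assert (R3 := D2 h ltac:(lra)). apply Rabs_def1; lra.
  - assert (N' : h < 0) by (destruct N; auto; congruence).
    assert (Q : (g (t + h) - g t) / h = chsl g (t - (- h)) t).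
    { unfold chsl. replace (t - - h) with (t + h) by ring. field. lra. }
    rewrite Q. assert (R1 := Rgt (- h) ltac:(lra) ltac:(lra)). assert (R2 := Lft (- h) ltac:(lra)).
    assert (R3 := D2 (- h) ltac:(lra)). apply Rabs_def1; lra.
Qed.

Definition gd (g : R -> R) (t : R) : R := epsilon (inhabits 0) (fun l => derivable_pt_lim g t l).

Lemma sig_mono_r g C a b b' : convex_on g 0 C -> 0 <= a -> a < b -> b <= b' -> b' <= C -> chsl g a b <= chsl g a b'.
Proof. intros Hc H1 H2 H3 H4. destruct (Rle_lt_or_eq_dec _ _ H3) as [L|E].
  destruct (three_chord g C a b b' Hc H1 H2 L H4); lra. subst; lra. Qed.
Lemma sig_mono_l g C a a' b : convex_on g 0 C -> 0 <= a -> a <= a' -> a' < b -> b <= C -> chsl g a b <= chsl g a' b.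
Proof. intros Hc H1 H2 H3 H4. destruct (Rle_lt_or_eq_dec _ _ H2) as [L|E].
  destruct (three_chord g C a a' b Hc H1 L H3 H4); lra. subst; lra. Qed.



Lemma gd_chord g C : 0 < C -> convex_on g 0 C ->
  (forall t, 0 < t < C -> derivable_pt_lim g t (gd g t)) ->
  forall s t, 0 < s -> s < t -> t < C -> gd g s <= chsl g s t <= gd g t.
Proof.
  intros HC Hc Hd s t Hs Hst Ht. split.
  - apply Rnot_lt_le. intros Hlt.
    destruct (Hd s ltac:(lra) (gd g s - chsl g s t) ltac:(lra)) as [[del Hdel] K].
    set (h := Rmin (del / 2) (t - s)).
    assert (Hh : 0 < h) by (apply Rmin_pos; lra).
    assert (Hh1 : h <= del / 2) by apply Rmin_l. assert (Hh2 : h <= t - s) by apply Rmin_r.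
    specialize (K h ltac:(lra) ltac:(simpl; rewrite Rabs_right; lra)).
    assert (Q : (g (s + h) - g s) / h = chsl g s (s + h)) by (unfold chsl; f_equal; ring).
    rewrite Q in K. assert (M := sig_mono_r g C s (s + h) t Hc ltac:(lra) ltac:(lra) ltac:(lra) ltac:(lra)).
    apply Rabs_def2 in K. lra.
  - apply Rnot_lt_le. intros Hlt.
    destruct (Hd t ltac:(lra) (chsl g s t - gd g t) ltac:(lra)) as [[del Hdel] K].
    set (h := Rmin (del / 2) (t - s)).
    assert (Hh : 0 < h) by (apply Rmin_pos; lra).
    assert (Hh1 : h <= del / 2) by apply Rmin_l. assert (Hh2 : h <= t - s) by apply Rmin_r.
    specialize (K (- h) ltac:(lra) ltac:(simpl; rewrite Rabs_left; lra)).
    assert (Q : (g (t + - h) - g t) / - h = chsl g (t - h) t) by (unfold chsl; replace (t + - h) with (t - h) by ring; field; lra).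
    rewrite Q in K. assert (M := sig_mono_l g C s (t - h) t Hc ltac:(lra) ltac:(lra) ltac:(lra) ltac:(lra)).
    apply Rabs_def2 in K. lra.
Qed.

Lemma gd_cont_int g C L : 0 < C -> convex_on g 0 C ->
  (forall s t, 0 <= s -> s <= t -> t <= C -> 0 <= g t - g s <= L * (t - s)) ->
  (forall t, 0 < t < C -> derivable_pt_lim g t (gd g t)) ->
  forall t0, 0 < t0 < C -> forall eps, 0 < eps -> exists eta, 0 < eta /\
    forall t, 0 < t < C -> Rabs (t - t0) < eta -> Rabs (gd g t - gd g t0) < eps.
Proof.
  intros HC Hc HM Hd t0 Ht0 eps He.
  assert (HL : 0 <= L). { destruct (HM 0 C) as [X1 X2]; try lra. nra. }
  destruct (Hd t0 Ht0 (eps / 2) ltac:(lra)) as [[d1 Hd1] K1].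
  set (h1 := Rmin (d1 / 2) ((C - t0) / 2)).
  assert (Hh1 : 0 < h1) by (apply Rmin_pos; lra).
  assert (Hh1a : h1 <= d1 / 2) by apply Rmin_l. assert (Hh1b : h1 <= (C - t0) / 2) by apply Rmin_r.
  specialize (K1 h1 ltac:(lra) ltac:(simpl; rewrite Rabs_right; lra)).
  set (b := t0 + h1). set (q := chsl g t0 b).
  assert (Qq : (g (t0 + h1) - g t0) / h1 = q) by (unfold q, chsl, b; f_equal; ring).
  rewrite Qq in K1. apply Rabs_def2 in K1.
  destruct (Hd t0 Ht0 (eps / 2) ltac:(lra)) as [[d2 Hd2] K2].
  set (h2 := Rmin (d2 / 2) (t0 / 2)).
  assert (Hh2 : 0 < h2) by (apply Rmin_pos; lra).
  assert (Hh2a : h2 <= d2 / 2) by apply Rmin_l. assert (Hh2b : h2 <= t0 / 2) by apply Rmin_r.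
  specialize (K2 (- h2) ltac:(lra) ltac:(simpl; rewrite Rabs_left; lra)).
  set (a := t0 - h2). set (p := chsl g a t0).
  assert (Qp : (g (t0 + - h2) - g t0) / - h2 = p).
  { unfold p, chsl, a. replace (t0 + - h2) with (t0 - h2) by ring. field. lra. }
  rewrite Qp in K2. apply Rabs_def2 in K2.
  set (e1 := Rmin (h1 / 2) (eps * h1 / (4 * (L + 1)))).
  set (e2 := Rmin (h2 / 2) (eps * h2 / (2 * (L + 1)))).
  assert (He1 : 0 < e1). { apply Rmin_pos. lra. apply Rdiv_lt_0_compat; [nra|lra]. }
  assert (He2 : 0 < e2). { apply Rmin_pos. lra. apply Rdiv_lt_0_compat; [nra|lra]. }
  exists (Rmin e1 e2). split; [apply Rmin_pos; auto|]. intros t Ht Htt.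
  assert (Ht1 : Rabs (t - t0) < e1) by (eapply Rlt_le_trans; [apply Htt|apply Rmin_l]).
  assert (Ht2 : Rabs (t - t0) < e2) by (eapply Rlt_le_trans; [apply Htt|apply Rmin_r]).
  apply Rabs_def2 in Ht1. apply Rabs_def2 in Ht2.
  assert (E1a : e1 <= h1 / 2) by apply Rmin_l. assert (E1b : e1 <= eps * h1 / (4 * (L + 1))) by apply Rmin_r.
  assert (E2a : e2 <= h2 / 2) by apply Rmin_l. assert (E2b : e2 <= eps * h2 / (2 * (L + 1))) by apply Rmin_r.
  destruct (Rtotal_order t t0) as [Lt|[Eq|Gt]].
  -
    destruct (gd_chord g C HC Hc Hd t t0 ltac:(lra) Lt ltac:(lra)) as [_ G1].
    destruct (gd_chord g C HC Hc Hd t t0 ltac:(lra) Lt ltac:(lra)) as [G2 _].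
    assert (GA : chsl g a t <= gd g t). { destruct (gd_chord g C HC Hc Hd a t ltac:(unfold a; lra) ltac:(unfold a; lra) ltac:(lra)) as [_ X]. exact X. }
    set (x := t0 - t). assert (Hx : 0 < x < h2 / 2) by (unfold x; lra).
    assert (Lx : L * x <= eps * h2 / 2).
    { apply Rle_trans with (L * (eps * h2 / (2 * (L + 1)))). apply Rmult_le_compat_l; unfold x; lra.
      apply (Rmult_le_reg_r (2 * (L + 1))). lra. field_simplify; [|lra]. nra. }
    assert (N0 : 0 <= g t - g a) by (destruct (HM a t); unfold a in *; lra).
    assert (N1 : g t0 - g t <= L * x) by (destruct (HM t t0); unfold x; lra).
    assert (Pd : p * h2 = g t0 - g a) by (unfold p, chsl, a; field; lra).
    assert (S1 : p - eps / 2 <= chsl g a t).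
    { unfold chsl. replace (t - a) with (h2 - x) by (unfold x, a; ring).
      apply (Rmult_le_reg_r (h2 - x)). lra. field_simplify; [|lra].
      assert ((g t - g a) * x <= (g t - g a) * h2) by nra. nra. }
    apply Rabs_def1; lra.
  - subst. replace (gd g t0 - gd g t0) with 0 by ring. rewrite Rabs_R0. lra.
  - destruct (gd_chord g C HC Hc Hd t0 t ltac:(lra) Gt ltac:(lra)) as [G1 G2].
    assert (GB : gd g t <= chsl g t b). { destruct (gd_chord g C HC Hc Hd t b ltac:(lra) ltac:(unfold b; lra) ltac:(unfold b; lra)) as [X _]. exact X. }
    set (x := t - t0). assert (Hx : 0 < x < h1 / 2) by (unfold x; lra).
    assert (Lx : L * x <= eps * h1 / 4).
    { apply Rle_trans with (L * (eps * h1 / (4 * (L + 1)))). apply Rmult_le_compat_l; unfold x; lra.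
      apply (Rmult_le_reg_r (4 * (L + 1))). lra. field_simplify; [|lra]. nra. }
    assert (Qd : q * h1 = g b - g t0) by (unfold q, chsl, b; field; lra).
    assert (N0 : 0 <= g t - g t0) by (destruct (HM t0 t); lra).
    assert (Hq : 0 <= q <= L).
    { unfold q, chsl, b. destruct (HM t0 (t0 + h1)) as [X1 X2]; try lra.
      replace (t0 + h1 - t0) with h1 by ring. split. apply Rdiv_le_0_compat; lra.
      apply (Rmult_le_reg_r h1). lra. field_simplify; lra. }
    assert (S1 : chsl g t b <= q + eps / 2).
    { unfold chsl. replace (b - t) with (h1 - x) by (unfold x, b; ring).
      apply (Rmult_le_reg_r (h1 - x)). lra. field_simplify; [|lra].
      assert (q * x <= L * x) by nra. nra. }
    apply Rabs_def1; lra.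
Qed.

Lemma C1_convex g C L : 0 < C -> convex_on g 0 C ->
  (forall s t, 0 <= s -> s <= t -> t <= C -> 0 <= g t - g s <= L * (t - s)) ->
  (forall t, 0 < t < C -> forall eps, 0 < eps -> exists eta, 0 < eta /\ forall h, 0 < h < eta ->
     0 <= t - h -> t + h <= C -> g (t + h) + g (t - h) - 2 * g t <= eps * h) ->
  C1_on g 0 C.
Proof.
  intros HC Hc HM H2.
  assert (HL : 0 <= L). { destruct (HM 0 C) as [X1 X2]; try lra. nra. }
  assert (Hd : forall t, 0 < t < C -> derivable_pt_lim g t (gd g t)).
  { intros t Ht. unfold gd. apply epsilon_spec. apply (deriv_exists g C); auto. }
  assert (Bd : forall t, 0 < t < C -> 0 <= gd g t <= L).
  { intros t Ht. split.
    - destruct (gd_chord g C HC Hc Hd (t / 2) t ltac:(lra) ltac:(lra) ltac:(lra)) as [_ X].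
      assert (0 <= chsl g (t / 2) t); [|lra]. unfold chsl. destruct (HM (t / 2) t); try lra.
      apply Rdiv_le_0_compat; lra.
    - destruct (gd_chord g C HC Hc Hd t ((t + C) / 2) ltac:(lra) ltac:(lra) ltac:(lra)) as [X _].
      assert (chsl g t ((t + C) / 2) <= L); [|lra]. unfold chsl. destruct (HM t ((t + C) / 2)); try lra.
      apply (Rmult_le_reg_r ((t + C) / 2 - t)). lra. field_simplify; lra. }
  assert (Mo : forall s t, 0 < s -> s <= t -> t < C -> gd g s <= gd g t).
  { intros s t H1 H3 H4. destruct (Rle_lt_or_eq_dec _ _ H3) as [Lt|Eq]; [|subst; lra].
    destruct (gd_chord g C HC Hc Hd s t H1 Lt H4). lra. }
  set (Elow := fun y => exists t, 0 < t < C /\ y = - gd g t).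
  set (Eup := fun y => exists t, 0 < t < C /\ y = gd g t).
  assert (Xl : exists m, is_lub Elow m).
  { destruct (completeness Elow) as [m Hm]. exists 0. intros y [t [Ht ->]]. specialize (Bd t Ht). lra.
    exists (- gd g (C / 2)). exists (C / 2). split; [split; lra|auto]. eauto. }
  assert (Xu : exists m, is_lub Eup m).
  { destruct (completeness Eup) as [m Hm]. exists L. intros y [t [Ht ->]]. specialize (Bd t Ht). lra.
    exists (gd g (C / 2)). exists (C / 2). split; [split; lra|auto]. eauto. }
  set (ml := epsilon (inhabits 0) (fun m => is_lub Elow m)).
  set (mu := epsilon (inhabits 0) (fun m => is_lub Eup m)).
  assert (Hml : is_lub Elow ml) by (apply epsilon_spec; auto).
  assert (Hmu : is_lub Eup mu) by (apply epsilon_spec; auto).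
  set (G := fun t => if Rle_dec t 0 then - ml else if Rle_dec C t then mu else gd g t).
  assert (Gi : forall t, 0 < t < C -> G t = gd g t).
  { intros t Ht. unfold G. destruct (Rle_dec t 0); [lra|]. destruct (Rle_dec C t); [lra|auto]. }
  split.
  - intros s Hs e He. exists (e / (L + 1)). split. apply Rdiv_lt_0_compat; lra.
    intros t Ht Hts. apply Rle_lt_trans with (L * Rabs (t - s)).
    + destruct (Rle_dec s t).
      * destruct (HM s t); try lra. rewrite !Rabs_right; lra.
      * destruct (HM t s); try lra. rewrite Rabs_left1 by lra. rewrite Rabs_left by lra. lra.
    + apply Rle_lt_trans with (L * (e / (L + 1))). apply Rmult_le_compat_l; lra.
      apply (Rmult_lt_reg_r (L + 1)). lra. field_simplify; lra.
  - exists G. split.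
    + intros t Ht. rewrite Gi by auto. apply Hd; auto.
    + intros s Hs e He. destruct (Rle_lt_or_eq_dec _ _ (proj1 Hs)) as [Hs0|Hs0];
      [destruct (Rle_lt_or_eq_dec _ _ (proj2 Hs)) as [Hs1|Hs1]|].
      * destruct (gd_cont_int g C L HC Hc HM Hd s (conj Hs0 Hs1) e He) as [eta [Heta K]].
        exists (Rmin eta (Rmin s (C - s))). split. repeat apply Rmin_pos; lra.
        intros t Ht Hts.
        assert (Q1 : Rmin eta (Rmin s (C - s)) <= eta) by apply Rmin_l.
        assert (Q2 : Rmin eta (Rmin s (C - s)) <= s) by (eapply Rle_trans; [apply Rmin_r|apply Rmin_l]).
        assert (Q3 : Rmin eta (Rmin s (C - s)) <= C - s) by (eapply Rle_trans; [apply Rmin_r|apply Rmin_r]).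
        apply Rabs_def2 in Hts as Hts'.
        rewrite !Gi by lra. apply K. lra. lra.
      * subst s.
        assert (F : exists t1, 0 < t1 < C /\ mu - e < gd g t1).
        { apply NNPP. intros N. destruct Hmu as [U Lb].
          assert (mu <= mu - e); [|lra]. apply Lb. intros y [t [Ht ->]].
          apply Rnot_lt_le. intros Q. apply N. exists t. auto. }
        destruct F as [t1 [Ht1 F]].
        exists (C - t1). split; [lra|]. intros t Ht Hts. apply Rabs_def2 in Hts.
        assert (GC : G C = mu) by (unfold G; destruct (Rle_dec C 0); [lra|]; destruct (Rle_dec C C); [auto|lra]).
        rewrite GC. destruct (Rle_lt_or_eq_dec _ _ (proj2 Ht)) as [Lt|Eq].
        -- rewrite Gi by lra. assert (gd g t1 <= gd g t) by (apply Mo; lra).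
           assert (gd g t <= mu) by (apply (proj1 Hmu); exists t; split; [split; lra|auto]).
           apply Rabs_def1; lra.
        -- subst t. rewrite GC. replace (mu - mu) with 0 by ring. rewrite Rabs_R0; lra.
      * subst s.
        assert (F : exists t1, 0 < t1 < C /\ gd g t1 < - ml + e).
        { apply NNPP. intros N. destruct Hml as [U Lb].
          assert (ml <= ml - e); [|lra]. apply Lb. intros y [t [Ht ->]].
          apply Rnot_lt_le. intros Q. apply N. exists t. split; auto. lra. }
        destruct F as [t1 [Ht1 F]].
        exists t1. split; [lra|]. intros t Ht Hts. apply Rabs_def2 in Hts.
        assert (G0 : G 0 = - ml) by (unfold G; destruct (Rle_dec 0 0); [auto|lra]).
        rewrite G0. destruct (Rle_lt_or_eq_dec _ _ (proj1 Ht)) as [Lt|Eq].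
        -- rewrite Gi by lra. assert (gd g t <= gd g t1) by (apply Mo; lra).
           assert (- gd g t <= ml) by (apply (proj1 Hml); exists t; split; [split; lra|auto]).
           apply Rabs_def1; lra.
        -- subst t. rewrite G0. replace (- ml - - ml) with 0 by ring. rewrite Rabs_R0; lra.
Qed.

Lemma RInt_Lz_le Cb d b : 0 < Cb -> 0 < d -> RInt (fun t => Lz d (b - t)) 0 Cb <= PI * d.
Proof.
  intros HC Hd.
  set (f1 := fun t => (b - t) * / d).
  assert (D1 : forall t, derivable_pt_lim f1 t (- / d)).
  { intros t. apply is_derive_Reals. unfold f1. auto_derive; auto. ring. }
  set (F := fun t => - d * atan ((b - t) / d)).
  assert (DF : forall t, derivable_pt_lim F t (Lz d (b - t))).
  { intros t. assert (X := derivable_pt_lim_scal _ (- d) t _ (derivable_pt_lim_comp f1 atan t _ _ (D1 t) (derivable_pt_lim_atan (f1 t)))).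
    replace (Lz d (b - t)) with (- d * (/ (1 + f1 t ^ 2) * - / d)). exact X.
    unfold Lz, f1. field. split; apply Rgt_not_eq. apply Rplus_lt_le_0_compat; [apply Rmult_lt_0_compat; lra|apply Rle_0_sqr]. lra. }
  assert (Hi : is_RInt (fun t => Lz d (b - t)) 0 Cb (minus (F Cb) (F 0))).
  { apply (@is_RInt_derive R_CompleteNormedModule F).
    - intros x _. apply is_derive_Reals. apply DF.
    - intros x _. apply (@ex_derive_continuous R_AbsRing R_NormedModule). unfold Lz. auto_derive. apply Rgt_not_eq. apply Rplus_lt_le_0_compat; [apply Rmult_lt_0_compat; lra|]. apply Rle_0_sqr. }
  rewrite (is_RInt_unique _ _ _ _ Hi). unfold minus, plus, opp. simpl. unfold F.
  destruct (atan_bound ((b - Cb) / d)). destruct (atan_bound ((b - 0) / d)).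
  assert (d * atan ((b - 0) / d) <= d * (PI / 2)) by (apply Rmult_le_compat_l; lra).
  assert (- (d * atan ((b - Cb) / d)) <= d * (PI / 2)) by nra.
  lra.
Qed.

Lemma ct_restrict M M' Cb g z : (M <= M')%nat -> ctsat M Cb g z -> ctsat M' Cb g z.
Proof. intros HM H e He. destruct (H e He) as [d [Hd K]]. exists d. split; auto.
  intros z' Hz' Cl. apply K. intros j Hj; apply Hz'; lia. intros j Hj; apply Cl; lia. Qed.

Lemma ucont_ext M Cb g1 g2 : (forall c, in_cube M Cb c -> g1 c = g2 c) -> ucont M Cb g1 -> ucont M Cb g2.
Proof. intros E H e He. destruct (H e He) as [d [Hd K]]. exists d. split; auto.
  intros c c' Hc Hc' Cl. rewrite <- !E by auto. auto. Qed.

Definition emb (N : nat) (x c : nat -> R) : nat -> R := fun j => if Nat.ltb j N then c j else x (j - N)%nat.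
Definition xpart (N : nat) (z : nat -> R) : nat -> R := fun j => z (N + j)%nat.

Lemma emb_lo N x c j : (j < N)%nat -> emb N x c j = c j.
Proof. intros. unfold emb. destruct (Nat.ltb_spec j N); [auto|lia]. Qed.
Lemma emb_hi N x c j : emb N x c (N + j)%nat = x j.
Proof. unfold emb. destruct (Nat.ltb_spec (N + j) N); [lia|]. f_equal. lia. Qed.

Lemma emb_cube N Cb x c : in_cube N Cb x -> in_cube N Cb c -> in_cube (N + N) Cb (emb N x c).
Proof. intros Hx Hc j Hj. unfold emb. destruct (Nat.ltb_spec j N). apply Hc; auto. apply Hx; lia. Qed.

Lemma ucont_emb N Cb G x : ucont (N + N) Cb G -> in_cube N Cb x -> ucont N Cb (fun c => G (emb N x c)).
Proof.
  intros H Hx e He. destruct (H e He) as [d [Hd K]]. exists d. split; auto.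
  intros c c' Hc Hc' Cl. apply K; try apply emb_cube; auto.
  intros j Hj. unfold emb. destruct (Nat.ltb_spec j N). apply Cl; auto.
  replace (x (j - N)%nat - x (j - N)%nat) with 0 by ring. rewrite Rabs_R0; auto.
Qed.

Lemma emb_close N Cb G : ucont (N + N) Cb G -> forall e, 0 < e -> exists d, 0 < d /\
  forall x y c, in_cube N Cb x -> in_cube N Cb y -> in_cube N Cb c ->
  (forall j, (j < N)%nat -> Rabs (y j - x j) < d) -> Rabs (G (emb N y c) - G (emb N x c)) < e.
Proof.
  intros H e He. destruct (H e He) as [d [Hd K]]. exists d. split; auto.
  intros x y c Hx Hy Hc Cl. apply K; try apply emb_cube; auto.
  intros j Hj. unfold emb. destruct (Nat.ltb_spec j N).
  replace (c j - c j) with 0 by ring. rewrite Rabs_R0; auto. apply Cl; lia.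
Qed.

Lemma iint_scal M Cb g a : 0 < Cb -> ucont M Cb g -> forall k c, (k <= M)%nat -> in_cube M Cb c ->
  iint k Cb (fun w => a * g w) c = a * iint k Cb g c.
Proof.
  intros HC Hg k c Hk Hc.
  rewrite (iint_ext M Cb (fun w => a * g w) (fun w => a * g w + 0 * g w) HC) by (auto; intros; ring).
  rewrite (iint_lin M Cb g g a 0 HC Hg Hg k c Hk Hc). ring.
Qed.

Lemma phi_ext lam N i x x' c c' : (i < N)%nat -> (forall j, (j < N)%nat -> x j = x' j) ->
  (forall j, (j < N)%nat -> c j = c' j) -> phi lam N i x c = phi lam N i x' c'.
Proof.
  intros Hi Ex Ec. unfold phi.
  rewrite (rsum_ext N (fun j => Rmax (x j - c j) 0) (fun j => Rmax (x' j - c' j) 0))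
    by (intros j Hj; rewrite Ex, Ec by auto; auto).
  rewrite (rsum_ext N x x') by auto. rewrite (rsum_ext N c c') by auto.
  rewrite (Ex i Hi), (Ec i Hi). reflexivity.
Qed.

Lemma phi_formula lam N i x c : phi lam N i x c =
  lam * Rmax (rsum N x - rsum N c) 0 * Rmax (x i - c i) 0 / rsum N (fun j => Rmax (x j - c j) 0).
Proof. unfold phi. destruct Req_EM_T as [E|E]; auto. rewrite E. unfold Rdiv. rewrite Rinv_0. ring. Qed.

Lemma Rmax_ge0 a : 0 <= Rmax a 0.
Proof. unfold Rmax; destruct Rle_dec; lra. Qed.

Lemma phi_bound lam N i x c : 0 < lam -> (i < N)%nat ->
  0 <= phi lam N i x c <= lam * rsum N (fun j => Rmax (x j - c j) 0).
Proof.
  intros Hl Hi. set (D := rsum N (fun j => Rmax (x j - c j) 0)).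
  assert (TD : Rmax (rsum N x - rsum N c) 0 <= D).
  { unfold D. rewrite <- rsum_minus. unfold Rmax at 1. destruct Rle_dec.
    apply rsum_nonneg; intros; apply Rmax_ge0. apply rsum_le. intros j Hj. unfold Rmax; destruct Rle_dec; lra. }
  assert (AD : Rmax (x i - c i) 0 <= D).
  { unfold D. rewrite (rsum_split N _ i Hi).
    assert (0 <= rsum N (fun j => if Nat.eqb j i then 0 else Rmax (x j - c j) 0)).
    { apply rsum_nonneg. intros j Hj. destruct (Nat.eqb j i). lra. apply Rmax_ge0. }
    lra. }
  assert (T0 := Rmax_ge0 (rsum N x - rsum N c)). assert (A0 := Rmax_ge0 (x i - c i)).
  unfold phi. fold D. destruct Req_EM_T as [E|E].
  - split; [lra|]. rewrite E. lra.
  - assert (HD : 0 < D) by lra.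
    split. apply Rdiv_le_0_compat; [|lra]. apply Rmult_le_pos; [|lra]. apply Rmult_le_pos; lra.
    apply (Rmult_le_reg_r D). lra. field_simplify; [|lra].
    assert (Rmax (rsum N x - rsum N c) 0 * Rmax (x i - c i) 0 <= D * D) by nra. nra.
Qed.

Lemma Jp_ct lam N i Cb z : 0 < lam -> (i < N)%nat ->
  ctsat (N + N) Cb (fun w => phi lam N i (xpart N w) w) z.
Proof.
  intros Hl Hi.
  set (Dz := fun w : nat -> R => rsum N (fun j => Rmax (w (N + j)%nat - w j) 0)).
  assert (CD : ctsat (N + N) Cb Dz z).
  { apply ct_rsum. intros j Hj. apply ct_max; [|apply ct_const]. apply ct_minus; apply ct_proj; lia. }
  assert (EF : forall w, phi lam N i (xpart N w) w =
     lam * Rmax (rsum N (fun j => w (N + j)%nat) - rsum N w) 0 * Rmax (w (N + i)%nat - w i) 0 / Dz w).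
  { intros w. rewrite phi_formula. reflexivity. }
  destruct (Req_dec (Dz z) 0) as [Z|Z].
  - intros e He. destruct (CD (e / lam)) as [d [Hd K]]. apply Rdiv_lt_0_compat; lra.
    exists d. split; auto. intros z' Hz' Cl. specialize (K z' Hz' Cl).
    assert (B1 : 0 <= phi lam N i (xpart N z') z' <= lam * Dz z') by exact (phi_bound lam N i (xpart N z') z' Hl Hi).
    assert (B2 : 0 <= phi lam N i (xpart N z) z <= lam * Dz z) by exact (phi_bound lam N i (xpart N z) z Hl Hi).
    rewrite Z in B2. rewrite Z in K. rewrite Rminus_0_r in K.
    assert (E2 : phi lam N i (xpart N z) z = 0) by lra.
    rewrite E2, Rminus_0_r.
    assert (Dz z' < e / lam) by (apply Rabs_def2 in K; lra).
    assert (lam * Dz z' < lam * (e / lam)) by (apply Rmult_lt_compat_l; lra).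
    replace (lam * (e / lam)) with e in H0 by (field; lra).
    rewrite Rabs_right by lra. lra.
  - apply (ct_ext _ _ (fun w => lam * Rmax (rsum N (fun j => w (N + j)%nat) - rsum N w) 0 * Rmax (w (N + i)%nat - w i) 0 / Dz w)).
    { intros w. rewrite EF. reflexivity. }
    apply ct_div; auto. apply ct_mult. apply ct_scal.
    + apply ct_max; [|apply ct_const]. apply ct_minus; apply ct_rsum; intros j Hj; apply ct_proj; lia.
    + apply ct_max; [|apply ct_const]. apply ct_minus; apply ct_proj; lia.
Qed.

Definition Aof N i (x c : nat -> R) := rsum N (fun j => if Nat.eqb j i then 0 else x j - c j).
Definition Pof N i (x c : nat -> R) := rsum N (fun j => if Nat.eqb j i then 0 else Rmax (x j - c j) 0).

Lemma AP_le N i x c : Aof N i x c <= Pof N i x c.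
Proof. apply rsum_le. intros j Hj. destruct (Nat.eqb j i). lra. unfold Rmax; destruct Rle_dec; lra. Qed.
Lemma P_nonneg N i x c : 0 <= Pof N i x c.
Proof. apply rsum_nonneg. intros j Hj. destruct (Nat.eqb j i). lra. apply Rmax_ge0. Qed.

Lemma sum_upd_minus N i x c r : (i < N)%nat ->
  rsum N (upd x i r) - rsum N c = Aof N i x c + (r - c i).
Proof.
  intros Hi. rewrite <- rsum_minus. rewrite (rsum_split N _ i Hi). rewrite upd_same.
  unfold Aof. f_equal. apply rsum_ext. intros j Hj. destruct (Nat.eqb_spec j i); auto.
  rewrite upd_other; auto.
Qed.

Lemma phi_Psi lam N i x c r : (i < N)%nat ->
  phi lam N i (upd x i r) c = Psi lam (Aof N i x c) (Pof N i x c) (r - c i).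
Proof.
  intros Hi.
  assert (HD : rsum N (fun j => Rmax (upd x i r j - c j) 0) = Pof N i x c + Rmax (r - c i) 0).
  { rewrite (rsum_split N _ i Hi). rewrite upd_same. unfold Pof. f_equal. apply rsum_ext.
    intros j Hj. destruct (Nat.eqb_spec j i); auto. rewrite upd_other; auto. }
  assert (HS := sum_upd_minus N i x c r Hi).
  unfold phi, Psi. cbv zeta. rewrite HD, HS, upd_same. reflexivity.
Qed.

Theorem mainTheorem2
  (N : nat) (HN : (1 <= N)%nat) (Cbar : R) (HCbar : 0 < Cbar)
  (lam : R) (Hlam : 0 < lam)
  (f : (nat -> R) -> R)
  (Hf_cont : cont_on_cube N Cbar f)
  (Hf_pos : forall c, in_cube N Cbar c -> 0 < f c)
  (Hf_norm : Expect N Cbar f (fun _ => 1) = 1)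
  (u : R -> R)
  (Hu_C1 : exists u', (forall t, derivable_pt_lim u t (u' t)) /\ continuity u')
  (Hu_nonneg : forall t, 0 <= u t)
  (Hu_concave : forall s t l, 0 <= l <= 1 ->
                  l * u s + (1 - l) * u t <= u (l * s + (1 - l) * t))
  (Hu_incr : forall s t, s <= t -> u s <= u t)
  (d0 : R) (Hd0 : Cbar < d0)
  (rho : R) (Hrho : 0 <= rho)
  (i : nat) (Hi : (i < N)%nat) :
  (forall x : nat -> R, in_cube N Cbar x ->
     C1_on (fun t => ExpPen lam N Cbar f i (upd x i t)) 0 Cbar /\
     convex_on (fun t => ExpPen lam N Cbar f i (upd x i t)) 0 Cbar /\
     concave_on (fun t => payoff lam N Cbar f u d0 i (upd x i t) rho) 0 Cbar) /\
  (forall x0 : nat -> R, in_cube N Cbar x0 ->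
     forall eps, 0 < eps -> exists del, 0 < del /\
       forall y, in_cube N Cbar y -> y i = x0 i ->
         (forall j, (j < N)%nat -> Rabs (y j - x0 j) < del) ->
         Rabs (ExpPen lam N Cbar f i y - ExpPen lam N Cbar f i x0) < eps) /\
  cont_on_cube N Cbar (fun x => payoff lam N Cbar f u d0 i x rho).
Proof.
  assert (HC := HCbar).
  assert (Hfn : forall c, in_cube N Cbar c -> 0 <= f c) by (intros; left; apply Hf_pos; auto).
  assert (f_ext : forall c c', in_cube N Cbar c -> in_cube N Cbar c' ->
            (forall j, (j < N)%nat -> c j = c' j) -> f c = f c').
  { intros c c' Hc Hc' E. destruct (Req_dec (f c') (f c)) as [Q|Q]; [auto|exfalso].
    assert (P0 : 0 < Rabs (f c' - f c)) by (apply Rabs_pos_lt; lra).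
    destruct (Hf_cont c Hc _ P0) as [d [Hd K]].
    assert (K' := K c' Hc' (fun j Hj => ltac:(rewrite (E j Hj); replace (c' j - c' j) with 0 by ring; rewrite Rabs_R0; exact Hd))).
    lra. }
  destruct Hu_C1 as [u' [Hu' _]].
  assert (cu : forall y, continuity_pt u y).
  { intros y. apply derivable_continuous_pt. exists (u' y). apply Hu'. }
  set (J := fun z => phi lam N i (xpart N z) z * f z).
  set (W := fun z => (u (d0 + z i - z (N + i)%nat) - phi lam N i (xpart N z) z) * f z).
  assert (fct : forall z, in_cube (N + N) Cbar z -> ctsat (N + N) Cbar f z).
  { intros z Hz. apply (ct_restrict N). lia. intros e He. apply (Hf_cont z); auto. intros j Hj; apply Hz; lia. }
  assert (UJ : ucont (N + N) Cbar J).
  { apply heine; auto. intros z Hz. apply ct_mult. apply Jp_ct; auto. apply fct; auto. }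
  assert (UW : ucont (N + N) Cbar W).
  { apply heine; auto. intros z Hz. apply ct_mult; [|apply fct; auto].
    apply ct_minus; [|apply Jp_ct; auto].
    apply (ct_comp _ _ (fun w => d0 + w i - w (N + i)%nat) u); [|apply cu].
    apply ct_minus. apply ct_plus. apply ct_const. apply ct_proj; lia. apply ct_proj; lia. }
  set (hx := fun (x c : nat -> R) => phi lam N i x c * f c).
  set (wx := fun (x c : nat -> R) => (u (d0 + c i - x i) - phi lam N i x c) * f c).
  assert (embN : forall x c, in_cube N Cbar c -> in_cube N Cbar (emb N x c)).
  { intros x c Hc j Hj. rewrite emb_lo; auto. }
  assert (phiE : forall x c, phi lam N i (xpart N (emb N x c)) (emb N x c) = phi lam N i x c).
  { intros x c. apply phi_ext; auto. intros j Hj. unfold xpart. apply emb_hi.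
    intros j Hj. apply emb_lo; auto. }
  assert (Jemb : forall x c, in_cube N Cbar c -> J (emb N x c) = hx x c).
  { intros x c Hc. unfold J, hx. rewrite phiE. f_equal. apply f_ext; auto.
    intros j Hj; apply emb_lo; auto. }
  assert (Wemb : forall x c, in_cube N Cbar c -> W (emb N x c) = wx x c).
  { intros x c Hc. unfold W, wx. rewrite phiE. rewrite emb_lo by auto. rewrite emb_hi.
    f_equal. apply f_ext; auto. intros j Hj; apply emb_lo; auto. }
  assert (Uh : forall x, in_cube N Cbar x -> ucont N Cbar (hx x)).
  { intros x Hx. apply (ucont_ext N Cbar (fun c => J (emb N x c))). intros; apply Jemb; auto.
    apply ucont_emb; auto. }
  assert (Uw : forall x, in_cube N Cbar x -> ucont N Cbar (wx x)).
  { intros x Hx. apply (ucont_ext N Cbar (fun c => W (emb N x c))). intros; apply Wemb; auto.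
    apply ucont_emb; auto. }
  assert (EP : forall x, ExpPen lam N Cbar f i x = iint N Cbar (hx x) (fun _ => 0)) by reflexivity.
  assert (PO : forall x, payoff lam N Cbar f u d0 i x rho = rho * x i + iint N Cbar (wx x) (fun _ => 0)) by reflexivity.
  assert (Z0 : in_cube N Cbar (fun _ => 0)) by (intros j Hj; lra).
  assert (CX : forall (F : (nat -> R) -> (nat -> R) -> R) (G : (nat -> R) -> R),
     ucont (N + N) Cbar G -> (forall x c, in_cube N Cbar c -> G (emb N x c) = F x c) ->
     (forall x, in_cube N Cbar x -> ucont N Cbar (F x)) ->
     forall eps, 0 < eps -> exists del, 0 < del /\ forall x y, in_cube N Cbar x -> in_cube N Cbar y ->
       (forall j, (j < N)%nat -> Rabs (y j - x j) < del) ->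
       Rabs (iint N Cbar (F y) (fun _ => 0) - iint N Cbar (F x) (fun _ => 0)) < eps).
  { intros F G UG FG UF eps Heps.
    assert (Hpow : 0 < Cbar ^ N) by (apply pow_lt; lra).
    destruct (emb_close N Cbar G UG (eps / (2 * (Cbar ^ N + 1)))) as [d [Hd K]].
    { apply Rdiv_lt_0_compat; lra. }
    exists d. split; auto. intros x y Hx Hy Cl.
    rewrite <- (Rmult_1_l (iint N Cbar (F y) _)).
    replace (1 * iint N Cbar (F y) (fun _ => 0) - iint N Cbar (F x) (fun _ => 0))
      with (1 * iint N Cbar (F y) (fun _ => 0) + (-1) * iint N Cbar (F x) (fun _ => 0)) by ring.
    rewrite <- (iint_lin N Cbar (F y) (F x) 1 (-1) HC (UF y Hy) (UF x Hx) N _ (le_n _) Z0).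
    eapply Rle_lt_trans.
    apply (iint_abs_le N Cbar _ (eps / (2 * (Cbar ^ N + 1))) HC).
    - apply ucont_lin; auto.
    - intros c Hc. left. rewrite <- !FG by auto.
      replace (1 * G (emb N y c) + -1 * G (emb N x c)) with (G (emb N y c) - G (emb N x c)) by ring.
      apply K; auto.
    - lia.
    - auto.
    - assert (Q : Cbar ^ N * (eps / (2 * (Cbar ^ N + 1))) = eps / 2 - eps / (2 * (Cbar ^ N + 1))) by (field; lra).
      rewrite Q. assert (0 < eps / (2 * (Cbar ^ N + 1))) by (apply Rdiv_lt_0_compat; lra). lra. }
  split; [|split].
  3: {
    intros c Hc eps Heps.
    destruct (CX wx W UW Wemb Uw (eps / 2) ltac:(lra)) as [d1 [Hd1 K1]].
    exists (Rmin d1 (eps / (2 * (rho + 1)))). split.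
    { apply Rmin_pos; auto. apply Rdiv_lt_0_compat; lra. }
    intros c' Hc' Cl. rewrite !PO.
    assert (A1 := K1 c c' Hc Hc' (fun j Hj => Rlt_le_trans _ _ _ (Cl j Hj) (Rmin_l _ _))).
    assert (A2 : Rabs (c' i - c i) < eps / (2 * (rho + 1))) by (eapply Rlt_le_trans; [apply Cl; auto|apply Rmin_r]).
    assert (A3 : Rabs (rho * (c' i - c i)) <= eps / 2).
    { rewrite Rabs_mult, (Rabs_right rho) by lra.
      apply Rle_trans with (rho * (eps / (2 * (rho + 1)))). apply Rmult_le_compat_l; lra.
      apply (Rmult_le_reg_r (2 * (rho + 1))). lra. field_simplify; nra. }
    replace (rho * c' i + iint N Cbar (wx c') (fun _ => 0) - (rho * c i + iint N Cbar (wx c) (fun _ => 0)))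
      with (rho * (c' i - c i) + (iint N Cbar (wx c') (fun _ => 0) - iint N Cbar (wx c) (fun _ => 0))) by ring.
    eapply Rle_lt_trans; [apply Rabs_triang|]. lra. }
  2: {
    intros x0 Hx0 eps Heps.
    destruct (CX hx J UJ Jemb Uh eps Heps) as [d [Hd K]].
    exists d. split; auto. intros y Hy _ Cl. rewrite !EP. apply K; auto. }
  intros x Hx.
  assert (Xc : forall t, 0 <= t <= Cbar -> in_cube N Cbar (upd x i t)) by (intros; apply in_cube_upd; auto).
  assert (hP : forall r c, hx (upd x i r) c = Psi lam (Aof N i x c) (Pof N i x c) (r - c i) * f c).
  { intros. unfold hx. rewrite phi_Psi; auto. }
  assert (gE : forall t, ExpPen lam N Cbar f i (upd x i t) = iint N Cbar (hx (upd x i t)) (fun _ => 0)) by reflexivity.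
  assert (Uf : ucont N Cbar f) by (apply heine; auto).
  assert (Uf1 : ucont N Cbar (fun c => 1 * f c)) by (apply (ucont_ext N Cbar f); auto; intros; ring).
  assert (Hnorm : iint N Cbar (fun c => 1 * f c) (fun _ => 0) = 1) by exact Hf_norm.
  assert (Gconv : convex_on (fun t => ExpPen lam N Cbar f i (upd x i t)) 0 Cbar).
  { intros s t l Hs Ht Hl. cbv beta. rewrite !gE.
    assert (Hm : 0 <= l * s + (1 - l) * t <= Cbar) by nra.
    rewrite <- (iint_lin N Cbar (hx (upd x i s)) (hx (upd x i t)) l (1 - l) HC (Uh _ (Xc s Hs)) (Uh _ (Xc t Ht)) N _ (le_n _) Z0).
    apply (iint_mono N Cbar _ _ HC (Uh _ (Xc _ Hm)) (ucont_lin _ _ _ _ _ _ (Uh _ (Xc s Hs)) (Uh _ (Xc t Ht)))); [|auto|auto].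
    intros c Hc. rewrite !hP.
    replace (l * s + (1 - l) * t - c i) with (l * (s - c i) + (1 - l) * (t - c i)) by ring.
    assert (K := Psi_convex lam (Aof N i x c) (Pof N i x c) (s - c i) (t - c i) l Hlam (P_nonneg _ _ _ _) (AP_le _ _ _ _) Hl).
    assert (0 <= f c) by auto. nra. }
  assert (Gml : forall s t, 0 <= s -> s <= t -> t <= Cbar ->
     0 <= ExpPen lam N Cbar f i (upd x i t) - ExpPen lam N Cbar f i (upd x i s) <= lam * (t - s)).
  { intros s t H1 H2 H3. rewrite !gE.
    replace (iint N Cbar (hx (upd x i t)) (fun _ => 0) - iint N Cbar (hx (upd x i s)) (fun _ => 0))
      with (1 * iint N Cbar (hx (upd x i t)) (fun _ => 0) + (-1) * iint N Cbar (hx (upd x i s)) (fun _ => 0)) by ring.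
    rewrite <- (iint_lin N Cbar (hx (upd x i t)) (hx (upd x i s)) 1 (-1) HC (Uh _ (Xc t ltac:(lra))) (Uh _ (Xc s ltac:(lra))) N _ (le_n _) Z0).
    assert (Ul := ucont_lin N Cbar _ _ 1 (-1) (Uh _ (Xc t ltac:(lra))) (Uh _ (Xc s ltac:(lra)))).
    assert (PW : forall c, in_cube N Cbar c ->
       0 <= 1 * hx (upd x i t) c + -1 * hx (upd x i s) c <= lam * (t - s) * (1 * f c)).
    { intros c Hc. rewrite !hP.
      assert (K := Psi_monolip lam (Aof N i x c) (Pof N i x c) (s - c i) (t - c i) Hlam (P_nonneg _ _ _ _) (AP_le _ _ _ _) ltac:(lra)).
      replace (t - c i - (s - c i)) with (t - s) in K by ring.
      assert (0 <= f c) by auto. split; nra. }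
    split.
    - assert (M0 := iint_mono N Cbar (fun _ => 0) _ HC (ucont_const _ _ _) Ul (fun c Hc => proj1 (PW c Hc)) N _ (le_n _) Z0).
      rewrite iint_const in M0 by auto. lra.
    - assert (M1 := iint_mono N Cbar _ (fun w => lam * (t - s) * (1 * f w)) HC Ul
        (ucont_ext N Cbar (fun w => lam * (t - s) * (1 * f w) + 0 * (1 * f w)) (fun w => lam * (t - s) * (1 * f w)) ltac:(intros; cbv beta; ring) (ucont_lin N Cbar _ _ (lam * (t - s)) 0 Uf1 Uf1))
        (fun c Hc => proj2 (PW c Hc)) N _ (le_n _) Z0).
      rewrite (iint_scal N Cbar (fun c => 1 * f c) (lam * (t - s)) HC Uf1 N _ (le_n _) Z0) in M1.
      rewrite Hnorm in M1. lra. }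
  destruct (ucont_bounded N Cbar f HC Uf) as [B HB].
  assert (fB : forall c, in_cube N Cbar c -> f c <= B).
  { intros c Hc. specialize (HB c Hc). unfold Rabs in HB; destruct Rcase_abs in HB; lra. }
  assert (B0 : 0 <= B) by (specialize (HB _ Z0); assert (Q := Rabs_pos (f (fun _ => 0))); lra).
  destruct N as [|n1]; [lia|].
  assert (Gd2 : forall t, 0 < t < Cbar -> forall eps, 0 < eps -> exists eta, 0 < eta /\ forall h, 0 < h < eta ->
     0 <= t - h -> t + h <= Cbar ->
     ExpPen lam (S n1) Cbar f i (upd x i (t + h)) + ExpPen lam (S n1) Cbar f i (upd x i (t - h))
       - 2 * ExpPen lam (S n1) Cbar f i (upd x i t) <= eps * h).
  { intros t Ht eps He.
    assert (HPI := PI_RGT_0).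
    assert (Hp1 : 0 <= Cbar ^ n1) by (apply pow_le; lra).
    assert (Hp2 : 0 <= Cbar ^ S n1) by (apply pow_le; lra).
    set (K1 := B * lam * 4 * Cbar ^ n1 * PI).
    set (K2 := 2 * B * lam * Cbar ^ S n1).
    assert (HK1 : 0 <= K1). { unfold K1. assert (0 <= B * lam) by (apply Rmult_le_pos; lra). assert (0 <= B * lam * 4) by (apply Rmult_le_pos; lra). assert (0 <= B * lam * 4 * Cbar ^ n1) by (apply Rmult_le_pos; lra). apply Rmult_le_pos; lra. }
    assert (HK2 : 0 <= K2). { unfold K2. assert (0 <= 2 * B) by lra. assert (0 <= 2 * B * lam) by (apply Rmult_le_pos; lra). apply Rmult_le_pos; lra. }
    set (dl := eps / (2 * (K1 + 1))).
    assert (Hdl : 0 < dl) by (apply Rdiv_lt_0_compat; lra).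
    exists (Rmin dl (eps * dl / (2 * (K2 + 1)))). split.
    { apply Rmin_pos; auto. apply Rdiv_lt_0_compat; [nra|lra]. }
    intros h Hh Hth1 Hth2.
    assert (Hh1 : h < dl) by (eapply Rlt_le_trans; [apply Hh|apply Rmin_l]).
    assert (Hh2 : h < eps * dl / (2 * (K2 + 1))) by (eapply Rlt_le_trans; [apply Hh|apply Rmin_r]).
    set (L1 := fun c : nat -> R => Lz dl (t - c i)).
    set (L2 := fun c : nat -> R => Lz dl (rsum (S n1) (upd x i t) - rsum (S n1) c)).
    assert (ctLz : forall G z, ctsat (S n1) Cbar G z -> ctsat (S n1) Cbar (fun w => Lz dl (G w)) z).
    { intros G z HG. unfold Lz. apply ct_div. apply ct_const. apply ct_plus. apply ct_const. apply ct_mult; auto.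
      apply Rgt_not_eq. apply Rplus_lt_le_0_compat; [apply Rmult_lt_0_compat; lra|apply Rle_0_sqr]. }
    assert (UL1 : ucont (S n1) Cbar L1).
    { apply heine; auto. intros z Hz. apply ctLz. apply ct_minus. apply ct_const. apply ct_proj; auto. }
    assert (UL2 : ucont (S n1) Cbar L2).
    { apply heine; auto. intros z Hz. apply ctLz. apply ct_minus. apply ct_const.
      apply ct_rsum. intros j Hj. apply ct_proj; auto. }
    assert (I1 : iint (S n1) Cbar L1 (fun _ => 0) <= Cbar ^ n1 * (PI * dl)).
    { assert (X := iint_slab (S n1) Cbar L1 i (PI * dl) HC UL1 Hi).
      assert (X' := X ltac:(intros c j tt Hj; unfold L1; rewrite upd_other by lia; auto)
        ltac:(intros c Hc; unfold L1; rewrite (RInt_ext _ (fun tt => Lz dl (t - tt))); [apply RInt_Lz_le; auto|];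
              intros tt _; rewrite upd_same; auto) (n1 - i)%nat (fun _ => 0) ltac:(lia) Z0).
      replace (S i + (n1 - i))%nat with (S n1) in X' by lia. replace (i + (n1 - i))%nat with n1 in X' by lia.
      exact X'. }
    assert (I2 : iint (S n1) Cbar L2 (fun _ => 0) <= Cbar ^ n1 * (PI * dl)).
    { assert (X := iint_slab (S n1) Cbar L2 0 (PI * dl) HC UL2 ltac:(lia)).
      assert (X' := X ltac:(intros c j tt Hj; exfalso; lia)
        ltac:(intros c Hc; unfold L2;
              rewrite (RInt_ext _ (fun tt => Lz dl ((rsum (S n1) (upd x i t) - rsum (S n1) c + c 0%nat) - tt)));
              [apply RInt_Lz_le; auto|];
              intros tt _; rewrite (rsum_upd (S n1) c 0 tt) by lia; f_equal; ring) n1 (fun _ => 0) ltac:(lia) Z0).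
      exact X'. }
    set (h1 := hx (upd x i (t + h))). set (h2 := hx (upd x i (t - h))). set (h0 := hx (upd x i t)).
    assert (U1 : ucont (S n1) Cbar h1) by (apply Uh, Xc; lra).
    assert (U2 : ucont (S n1) Cbar h2) by (apply Uh, Xc; lra).
    assert (U0 : ucont (S n1) Cbar h0) by (apply Uh, Xc; lra).
    rewrite !gE. fold h1 h2 h0.
    assert (U12 := ucont_lin _ _ h1 h2 1 1 U1 U2).
    assert (E1 := iint_lin _ Cbar h1 h2 1 1 HC U1 U2 (S n1) _ (le_n _) Z0).
    assert (E2 := iint_lin _ Cbar _ h0 1 (-2) HC U12 U0 (S n1) _ (le_n _) Z0).
    rewrite E1 in E2.
    set (a1 := 2 * B * lam * h). set (a3 := 2 * B * lam * h * h / dl).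
    assert (UL12 := ucont_lin _ _ L1 L2 1 1 UL1 UL2).
    assert (E3 := iint_lin _ Cbar _ (fun _ => 1) a1 a3 HC UL12 (ucont_const _ _ _) (S n1) _ (le_n _) Z0).
    assert (E4 := iint_lin _ Cbar L1 L2 1 1 HC UL1 UL2 (S n1) _ (le_n _) Z0).
    rewrite E4, iint_const in E3 by auto.
    assert (Mn := iint_mono _ Cbar _ _ HC (ucont_lin _ _ _ _ 1 (-2) U12 U0) (ucont_lin _ _ _ _ a1 a3 UL12 (ucont_const _ _ 1))).
    assert (PW : forall c, in_cube (S n1) Cbar c ->
      1 * (1 * h1 c + 1 * h2 c) + -2 * h0 c <= a1 * (1 * L1 c + 1 * L2 c) + a3 * 1).
    { intros c Hc. unfold h1, h2, h0. rewrite !hP.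
      set (A := Aof (S n1) i x c). set (P := Pof (S n1) i x c). set (s := t - c i).
      replace (t + h - c i) with (s + h) by (unfold s; ring). replace (t - h - c i) with (s - h) by (unfold s; ring).
      assert (K := Psi_d2 lam A P s h dl Hlam (P_nonneg _ _ _ _) (AP_le _ _ _ _) ltac:(lra) ltac:(lra)).
      assert (EL2 : L2 c = Lz dl (s + A)).
      { unfold L2. rewrite sum_upd_minus by auto. fold A. unfold s. f_equal. ring. }
      assert (EL1 : L1 c = Lz dl s) by reflexivity.
      rewrite EL1, EL2.
      assert (Hf0 : 0 <= f c) by auto. assert (HfB : f c <= B) by auto.
      assert (LL1 := Lz_nonneg dl s Hdl). assert (LL2 := Lz_nonneg dl (s + A) Hdl).
      set (Y := lam * h * (2 * Lz dl s + 2 * Lz dl (s + A)) + 2 * lam * h * h / dl) in K.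
      assert (HY : 0 <= Y).
      { unfold Y. apply Rplus_le_le_0_compat. apply Rmult_le_pos; [apply Rmult_le_pos|]; lra.
        apply Rdiv_le_0_compat; [|lra]. repeat apply Rmult_le_pos; lra. }
      set (X := Psi lam A P (s + h) + Psi lam A P (s - h) - 2 * Psi lam A P s) in K.
      assert (EQL : 1 * (1 * (Psi lam A P (s + h) * f c) + 1 * (Psi lam A P (s - h) * f c)) + -2 * (Psi lam A P s * f c) = X * f c)
        by (unfold X; ring).
      assert (EQR : a1 * (1 * Lz dl s + 1 * Lz dl (s + A)) + a3 * 1 = Y * B)
        by (unfold a1, a3, Y; field; lra).
      rewrite EQL, EQR.
      assert (X * f c <= Y * f c) by (apply Rmult_le_compat_r; lra).
      assert (Y * f c <= Y * B) by (apply Rmult_le_compat_l; lra). lra. }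
    specialize (Mn PW (S n1) _ (le_n _) Z0).
    cbv beta in Mn. rewrite E2, E3 in Mn.
    assert (Fin : a1 * (1 * iint (S n1) Cbar L1 (fun _ => 0) + 1 * iint (S n1) Cbar L2 (fun _ => 0)) + a3 * (Cbar ^ S n1 * 1)
                  <= h * (K1 * dl + K2 * h / dl)).
    { assert (Ha1 : 0 <= a1) by (unfold a1; repeat apply Rmult_le_pos; lra).
      apply Rle_trans with (a1 * (2 * (Cbar ^ n1 * (PI * dl))) + a3 * (Cbar ^ S n1 * 1)).
      apply Rplus_le_compat_r. apply Rmult_le_compat_l; lra.
      unfold a1, a3, K1, K2. right. field. lra. }
    assert (Fin2 : h * (K1 * dl + K2 * h / dl) <= eps * h).
    { assert (K1 * dl <= eps / 2).
      { unfold dl. apply (Rmult_le_reg_r (2 * (K1 + 1))). lra. field_simplify; [|lra]. nra. }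
      assert (K2 * h / dl <= eps / 2).
      { apply (Rmult_le_reg_r dl). lra. field_simplify; [|lra].
        assert (K2 * h <= K2 * (eps * dl / (2 * (K2 + 1)))) by (apply Rmult_le_compat_l; lra).
        assert (K2 * (eps * dl / (2 * (K2 + 1))) <= eps * dl / 2).
        { apply (Rmult_le_reg_r (2 * (K2 + 1))). lra. field_simplify; [|lra]. nra. }
        lra. }
      nra. }
    lra. }
  split; [|split; auto].
  - apply (C1_convex _ Cbar lam HC Gconv Gml Gd2).
  -
    intros s t l Hs Ht Hl. cbv beta. rewrite !PO. rewrite !upd_same.
    assert (Hm : 0 <= l * s + (1 - l) * t <= Cbar) by nra.
    assert (Ws : ucont (S n1) Cbar (wx (upd x i s))) by (apply Uw, Xc; lra).
    assert (Wt : ucont (S n1) Cbar (wx (upd x i t))) by (apply Uw, Xc; lra).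
    assert (Wm : ucont (S n1) Cbar (wx (upd x i (l * s + (1 - l) * t)))) by (apply Uw, Xc; lra).
    assert (EL := iint_lin _ Cbar _ _ l (1 - l) HC Ws Wt (S n1) _ (le_n _) Z0).
    assert (Mn := iint_mono _ Cbar _ _ HC (ucont_lin _ _ _ _ l (1 - l) Ws Wt) Wm).
    assert (PW : forall c, in_cube (S n1) Cbar c ->
       l * wx (upd x i s) c + (1 - l) * wx (upd x i t) c <= wx (upd x i (l * s + (1 - l) * t)) c).
    { intros c Hc. unfold wx. rewrite !upd_same.
      assert (Pe : forall r, phi lam (S n1) i (upd x i r) c = Psi lam (Aof (S n1) i x c) (Pof (S n1) i x c) (r - c i))
        by (intros; apply phi_Psi; auto).
      rewrite !Pe.
      replace (l * s + (1 - l) * t - c i) with (l * (s - c i) + (1 - l) * (t - c i)) by ring.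
      assert (K := Psi_convex lam (Aof (S n1) i x c) (Pof (S n1) i x c) (s - c i) (t - c i) l Hlam (P_nonneg _ _ _ _) (AP_le _ _ _ _) Hl).
      assert (Ku := Hu_concave (d0 + c i - s) (d0 + c i - t) l Hl).
      replace (l * (d0 + c i - s) + (1 - l) * (d0 + c i - t)) with (d0 + c i - (l * s + (1 - l) * t)) in Ku by ring.
      assert (0 <= f c) by auto. nra. }
    specialize (Mn PW (S n1) _ (le_n _) Z0). rewrite EL in Mn. nra.
Qed.
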